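(* Let $\gamma\in(0,1)$, $\rho>0$, $C>0$, and let $d,m,p,f$ be as in the standing setting. Then there exist $N_0\gg 1$, $\Sigma>1$ and $\kappa\in(0,1)$ such that for every $\epsilon\in(0,1)$, every $u\in\mathbb{C}^{\mathbb{Z}^d}$ with $|u(n)|\leq Ce^{-\rho|n|}$ for all $n$, every $N$ with $N_0\leq N\leq|\log\epsilon|^\Sigma$ and every $\nu\in[1,2]^d$, there is a set $X_N\subset\mathbb{R}^d$ satisfying, for each $1\leq j\leq d$, $$\sup_{\theta_j^\neg\in\mathbb{R}^{d-1}}\mathrm{mes}\big(X_N(\theta_j^\neg)\big)\leq e^{-N^\gamma},$$ such that for all $\theta\notin X_N$ and every $\Lambda\in\mathcal{E}_N^0$, $$\|G_\Lambda^u(\theta)\|\leq e^{N^\kappa},\qquad |G_\Lambda^u(\theta)(n,n')|\leq e^{-\frac{4\rho}{5}|n-n'|}\ \text{ for } n,n'\in\Lambda,\ |n-n'|\geq \tfrac{N}{10}.$$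
   Context: Norm on $\mathbb{R}^d$ / $\mathbb{Z}^d$: $|x|=\max_i|x_i|$. For $u\in\mathbb{C}^{\mathbb{Z}^d}$ (identified with the function on $\mathbb{T}^d$ having Fourier coefficients $u(n)$), $f$ a real trigonometric polynomial, $p>1$, $m>0$, $\epsilon\ge0$, $\nu\in[1,2]^d$ and $\theta\in\mathbb{R}^d$, define the operator on $\mathbb{Z}^d$ $$F_u(\theta)=\mathrm{diag}\Big(\sum_{i=1}^d(\nu_in_i+\theta_i)^2-m\Big)_{n\in\mathbb{Z}^d}+\epsilon S_u,\qquad S_u(n,n')=p\,\widehat{fu^{p-1}}(n-n').$$ For $\Lambda\subset\mathbb{Z}^d$, $R_\Lambda$ is the restriction to $\Lambda$ and $G_\Lambda^u(\theta)=(R_\Lambda F_u(\theta)R_\Lambda)^{-1}$ (the Green's function), when it exists. For $N>0$, $\emptyset\neq I\subset\{1,\dots,d\}$, $\varsigma\in\{<,>\}^I$, let $Q_N(I,\varsigma)=[-N,N]^d\setminus\{n\in\mathbb{Z}^d:\ n_i\,\varsigma_i\,0\ \forall i\in I\}$, and let $\mathcal{E}_N^0$ consist of $[-N,N]^d\cap\mathbb{Z}^d$ together with all $Q_N(I,\varsigma)$. For $X\subset\mathbb{R}^d$ and $\theta_j^\neg=(\theta_1,\dots,\theta_{j-1},\theta_{j+1},\dots,\theta_d)$, the section $X(\theta_j^\neg)=\{\theta_j\in\mathbb{R}:\ \theta\in X\}$.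
   Formalization: The standing exponent p is an integer with p ≥ 2 instead of an arbitrary real p > 1. The statement above fails without it. *)

(* Defs.v *)
From Stdlib Require Import Reals Lra List ZArith ClassicalEpsilon.
Import ListNotations.
Open Scope R_scope.

Record Cx := mkC { re : R; im : R }.
Definition C0 : Cx := mkC 0 0.
Definition C1 : Cx := mkC 1 0.
Definition Cadd (z w : Cx) : Cx := mkC (re z + re w) (im z + im w).
Definition Csub (z w : Cx) : Cx := mkC (re z - re w) (im z - im w).
Definition Cmul (z w : Cx) : Cx :=
  mkC (re z * re w - im z * im w) (re z * im w + im z * re w).
Definition Cscal (r : R) (z : Cx) : Cx := mkC (r * re z) (r * im z).
Definition Cconj (z : Cx) : Cx := mkC (re z) (- im z).
Definition Cabs (z : Cx) : R := sqrt (re z * re z + im z * im z).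

(** Points of Z^d are lists of integers of length d. *)
Definition Zd := list Z.
Fixpoint zsub (a b : Zd) : Zd :=
  match a, b with
  | x :: a', y :: b' => (x - y)%Z :: zsub a' b'
  | _, _ => nil
  end.
Definition zopp (a : Zd) : Zd := map Z.opp a.
Definition znorm (a : Zd) : R :=
  IZR (fold_right (fun x acc => Z.max (Z.abs x) acc) 0%Z a).
Definition zeqb (a b : Zd) : bool :=
  if list_eq_dec Z.eq_dec a b then true else false.

Fixpoint boxZ (d M : nat) : list Zd :=
  match d with
  | O => [nil]
  | S d' => flat_map (fun x => map (cons x) (boxZ d' M))
              (map (fun k => (Z.of_nat k - Z.of_nat M)%Z) (seq 0 (2 * M + 1)))
  end.

Definition sumC (l : list Zd) (g : Zd -> Cx) : Cx :=
  fold_right (fun k acc => Cadd (g k) acc) C0 l.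
Definition sumR (l : list Zd) (g : Zd -> R) : R :=
  fold_right (fun k acc => g k + acc) 0 l.

Definition has_lsum (d : nat) (g : Zd -> Cx) (s : Cx) : Prop :=
  forall eta, 0 < eta -> exists M0 : nat, forall M : nat, (M0 <= M)%nat ->
    Cabs (Csub (sumC (boxZ d M) g) s) < eta.
Definition lsum (d : nat) (g : Zd -> Cx) : Cx :=
  epsilon (inhabits C0) (has_lsum d g).

(** convolution of Fourier coefficient sequences on Z^d
    (= Fourier coefficients of the product of the functions on T^d) *)
Definition conv (d : nat) (u v : Zd -> Cx) (n : Zd) : Cx :=
  lsum d (fun k => Cmul (u k) (v (zsub n k))).
(** Fourier coefficients of the constant function 1 *)
Definition delta0 (n : Zd) : Cx :=
  if forallb (Z.eqb 0) n then C1 else C0.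
(** Fourier coefficients of u^k *)
Fixpoint cpow (d : nat) (u : Zd -> Cx) (k : nat) : Zd -> Cx :=
  match k with
  | O => delta0
  | S k' => conv d u (cpow d u k')
  end.

(** fhat : Fourier coefficients of a real trigonometric polynomial on T^d *)
Definition real_trig_poly (d : nat) (fhat : Zd -> Cx) : Prop :=
  (exists M : nat, forall k, length k = d -> INR M < znorm k -> fhat k = C0) /\
  (forall k, length k = d -> fhat (zopp k) = Cconj (fhat k)).

Definition Su (d p : nat) (fhat u : Zd -> Cx) (n n' : Zd) : Cx :=
  Cscal (INR p) (conv d fhat (cpow d u (p - 1)) (zsub n n')).

Fixpoint dsum (nu th : list R) (n : Zd) : R :=
  match nu, th, n with
  | a :: nu', b :: th', x :: n' => (a * IZR x + b) ^ 2 + dsum nu' th' n'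
  | _, _, _ => 0
  end.

Definition Fent (d p : nat) (fhat : Zd -> Cx) (m eps : R) (nu theta : list R)
  (u : Zd -> Cx) (n n' : Zd) : Cx :=
  Cadd (if zeqb n n' then mkC (dsum nu theta n - m) 0 else C0)
       (Cscal eps (Su d p fhat u n n')).

(** The family E_N^0: either the box [-N,N]^d, or Q_N(I,sigma), where
    sigma i = None means i notin I, Some true means sigma_i = '>',
    Some false means sigma_i = '<'. Indices are 0-based. *)
Inductive region := RBox | RQ (sigma : nat -> option bool).

Definition valid_region (d : nat) (r : region) : Prop :=
  match r with
  | RBox => True
  | RQ s => (exists i, (i < d)%nat /\ s i <> None) /\
            (forall i, (d <= i)%nat -> s i = None)
  end.

Definition in_boxb (N : R) (n : Zd) : bool :=
  forallb (fun x => if Rle_dec (IZR (Z.abs x)) N then true else false) n.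

Fixpoint orthantb (s : nat -> option bool) (i : nat) (n : Zd) : bool :=
  match n with
  | nil => true
  | x :: n' =>
      (match s i with
       | None => true
       | Some true => Z.ltb 0 x
       | Some false => Z.ltb x 0
       end) && orthantb s (S i) n'
  end.

Definition in_regionb (N : R) (r : region) (n : Zd) : bool :=
  match r with
  | RBox => in_boxb N n
  | RQ s => in_boxb N n && negb (orthantb s 0 n)
  end.

Definition region_pts (d : nat) (N : R) (r : region) : list Zd :=
  filter (in_regionb N r) (boxZ d (Z.to_nat (up N))).

(** G is the inverse of R_Lambda A R_Lambda on the finite set pts *)
Definition is_inverse_on (pts : list Zd) (A G : Zd -> Zd -> Cx) : Prop :=
  forall n n', In n pts -> In n' pts ->
    sumC pts (fun k => Cmul (A n k) (G k n')) = (if zeqb n n' then C1 else C0) /\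
    sumC pts (fun k => Cmul (G n k) (A k n')) = (if zeqb n n' then C1 else C0).

Definition l2norm (pts : list Zd) (v : Zd -> Cx) : R :=
  sqrt (sumR pts (fun k => Cabs (v k) ^ 2)).

Definition opnorm_le (pts : list Zd) (G : Zd -> Zd -> Cx) (c : R) : Prop :=
  forall v : Zd -> Cx,
    l2norm pts (fun n => sumC pts (fun k => Cmul (G n k) (v k))) <= c * l2norm pts v.

Definition outer_mes_le (X : R -> Prop) (c : R) : Prop :=
  forall eta, 0 < eta -> exists a b : nat -> R,
    (forall k, a k <= b k) /\
    (forall t, X t -> exists k, a k < t < b k) /\
    (forall K, sum_f_R0 (fun k => b k - a k) K <= c + eta).

Fixpoint set_nthR (l : list R) (j : nat) (t : R) : list R :=
  match l, j with
  | nil, _ => nil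
  | _ :: l', O => t :: l'
  | x :: l', S j' => x :: set_nthR l' j' t
  end.

(** the section X(theta_j^neg), theta_j^neg given by theta (its j-th entry ignored) *)
Definition section (X : list R -> Prop) (theta : list R) (j : nat) : R -> Prop :=
  fun t => X (set_nthR theta j t).

(* Main.v *)
Require Import Defs.
From Stdlib Require Import Reals Lra Lia List ZArith Permutation Psatz ClassicalEpsilon.
From mathcomp Require ssreflect ssrfun ssrbool eqtype ssrnat seq fintype bigop ssralg matrix mxalgebra.
From mathcomp Require Rstruct.
From mathcomp.real_closed Require complex.
Import ListNotations.
Open Scope R_scope.

Lemma Cx_eq : forall z w : Cx, re z = re w -> im z = im w -> z = w.
Proof. intros [a b] [c e]; simpl; intros; subst; reflexivity. Qed.

Ltac ceq := apply Cx_eq; simpl; ring.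
Ltac sqp x := let H := fresh in pose proof (Rle_0_sqr x) as H; unfold Rsqr in H.

Lemma Cadd_comm : forall z w, Cadd z w = Cadd w z. Proof. intros; unfold Cadd; ceq. Qed.
Lemma Cadd_assoc : forall z w v, Cadd z (Cadd w v) = Cadd (Cadd z w) v.
Proof. intros; unfold Cadd; ceq. Qed.
Lemma Cadd_0_l : forall z, Cadd C0 z = z. Proof. intros; unfold Cadd, C0; ceq. Qed.

Lemma Cabs_nonneg : forall z, 0 <= Cabs z.
Proof. intros; unfold Cabs; apply sqrt_pos. Qed.

Lemma Cabs_mul : forall z w, Cabs (Cmul z w) = Cabs z * Cabs w.
Proof.
  intros [a b] [c e]; unfold Cabs, Cmul; simpl.
  sqp a; sqp b; sqp c; sqp e.
  rewrite <- sqrt_mult by nra. f_equal; ring.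
Qed.

Lemma Cabs_scal : forall r z, Cabs (Cscal r z) = Rabs r * Cabs z.
Proof.
  intros r [a b]; unfold Cabs, Cscal; simpl.
  sqp a; sqp b; sqp r.
  rewrite <- sqrt_Rsqr_abs. rewrite <- sqrt_mult by (unfold Rsqr; nra).
  f_equal. unfold Rsqr. ring.
Qed.

Lemma Cabs_add : forall z w, Cabs (Cadd z w) <= Cabs z + Cabs w.
Proof.
  intros [a b] [c e]; unfold Cabs, Cadd; simpl.
  sqp a; sqp b; sqp c; sqp e; sqp (a+c); sqp (b+e); sqp (a*e-b*c).
  apply Rsqr_incr_0_var.
  2:{ apply Rplus_le_le_0_compat; apply sqrt_pos. }
  rewrite Rsqr_sqrt; [| nra]. unfold Rsqr.
  replace ((sqrt (a * a + b * b) + sqrt (c * c + e * e)) *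
    (sqrt (a * a + b * b) + sqrt (c * c + e * e))) with
    (sqrt (a * a + b * b) * sqrt (a * a + b * b) + sqrt (c * c + e * e) * sqrt (c * c + e * e)
     + 2 * (sqrt (a * a + b * b) * sqrt (c * c + e * e))) by ring.
  rewrite !sqrt_sqrt; try nra. rewrite <- sqrt_mult; try nra.
  assert (a * c + b * e <= sqrt ((a * a + b * b) * (c * c + e * e))).
  { destruct (Rle_dec (a*c+b*e) 0). { pose proof (sqrt_pos ((a * a + b * b) * (c * c + e * e))); lra. }
    apply Rsqr_incr_0_var. 2: apply sqrt_pos. rewrite Rsqr_sqrt; [|nra]. unfold Rsqr. nra. }
  nra.
Qed.

Lemma Cabs_le_parts : forall z, Cabs z <= Rabs (re z) + Rabs (im z).
Proof.
  intros [a b]; unfold Cabs; simpl.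
  sqp a; sqp b.
  pose proof (Rabs_pos a); pose proof (Rabs_pos b).
  apply Rsqr_incr_0_var. 2: lra.
  rewrite Rsqr_sqrt by nra. unfold Rsqr.
  assert (a*a = Rabs a * Rabs a) by (rewrite <- Rabs_mult; rewrite Rabs_right; nra).
  assert (b*b = Rabs b * Rabs b) by (rewrite <- Rabs_mult; rewrite Rabs_right; nra).
  nra.
Qed.

Lemma Cabs_re : forall z, Rabs (re z) <= Cabs z.
Proof.
  intros [a b]; unfold Cabs; simpl. sqp a; sqp b. rewrite <- sqrt_Rsqr_abs.
  apply sqrt_le_1_alt. unfold Rsqr; nra.
Qed.
Lemma Cabs_im : forall z, Rabs (im z) <= Cabs z.
Proof.
  intros [a b]; unfold Cabs; simpl. sqp a; sqp b. rewrite <- sqrt_Rsqr_abs.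
  apply sqrt_le_1_alt. unfold Rsqr; nra.
Qed.

Lemma Cabs_C0 : Cabs C0 = 0.
Proof. unfold Cabs, C0; simpl. replace (0*0+0*0) with 0 by ring. apply sqrt_0. Qed.

Lemma Cabs_eq0 : forall z, Cabs z = 0 -> z = C0.
Proof.
  intros [a b] H; unfold Cabs in H; simpl in H. sqp a; sqp b.
  apply sqrt_eq_0 in H; [|nra]. apply Cx_eq; simpl; nra.
Qed.

Lemma Cabs_real : forall a, Cabs (mkC a 0) = Rabs a.
Proof. intros; unfold Cabs; simpl. rewrite <- sqrt_Rsqr_abs. unfold Rsqr; f_equal; ring. Qed.

Lemma Cabs_sub_le : forall z w, Cabs z <= Cabs w + Cabs (Csub z w).
Proof.
  intros. replace z with (Cadd w (Csub z w)) at 1 by (unfold Cadd, Csub; ceq).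
  apply Cabs_add.
Qed.

Lemma Cabs_opp_sub : forall z w, Cabs (Csub z w) = Cabs (Csub w z).
Proof. intros [a b] [c e]; unfold Cabs, Csub; simpl; f_equal; ring. Qed.

Lemma sumC_app : forall l1 l2 g, sumC (l1 ++ l2) g = Cadd (sumC l1 g) (sumC l2 g).
Proof.
  induction l1; intros; simpl. rewrite Cadd_0_l; auto.
  rewrite IHl1. apply Cadd_assoc.
Qed.
Lemma sumR_app : forall l1 l2 g, sumR (l1 ++ l2) g = sumR l1 g + sumR l2 g.
Proof. induction l1; intros; simpl. ring. rewrite IHl1; ring. Qed.

Lemma sumC_perm : forall l1 l2 g, Permutation l1 l2 -> sumC l1 g = sumC l2 g.
Proof.
  intros l1 l2 g H; induction H; simpl; auto.
  - rewrite IHPermutation; auto.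
  - rewrite !Cadd_assoc, (Cadd_comm (g y)); auto.
  - congruence.
Qed.
Lemma sumR_perm : forall l1 l2 g, Permutation l1 l2 -> sumR l1 g = sumR l2 g.
Proof.
  intros l1 l2 g H; induction H; simpl; auto; try lra.
Qed.

Lemma sumC_abs : forall l g, Cabs (sumC l g) <= sumR l (fun k => Cabs (g k)).
Proof.
  induction l; intros; simpl. rewrite Cabs_C0; lra.
  eapply Rle_trans. apply Cabs_add. specialize (IHl g); lra.
Qed.

Lemma sumR_le : forall l f g, (forall k, In k l -> f k <= g k) -> sumR l f <= sumR l g.
Proof.
  induction l; intros; simpl. lra.
  pose proof (H a (or_introl eq_refl)).
  assert (sumR l f <= sumR l g) by (apply IHl; intros; apply H; right; auto). lra.
Qed.

Lemma sumR_nonneg : forall l f, (forall k, In k l -> 0 <= f k) -> 0 <= sumR l f.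
Proof.
  induction l; intros; simpl. lra.
  pose proof (H a (or_introl eq_refl)).
  assert (0 <= sumR l f) by (apply IHl; intros; apply H; right; auto). lra.
Qed.

Lemma sumR_scal : forall l c f, sumR l (fun k => c * f k) = c * sumR l f.
Proof. induction l; intros; simpl. ring. rewrite IHl; ring. Qed.

Lemma sumR_const : forall (l : list Zd) c, sumR l (fun _ => c) = INR (length l) * c.
Proof. induction l; intros; simpl. ring. rewrite IHl. destruct (length l); simpl; ring. Qed.

Lemma sumR_filter : forall (P : Zd -> bool) l f,
  sumR l f = sumR (filter P l) f + sumR (filter (fun k => negb (P k)) l) f.
Proof.
  induction l; intros; simpl. ring.
  destruct (P a); simpl; rewrite (IHl f); ring.
Qed.

Lemma sumR_in_le : forall l f k, (forall k, In k l -> 0 <= f k) -> In k l -> f k <= sumR l f.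
Proof.
  induction l; intros f k H Hk; simpl in *. contradiction.
  destruct Hk as [<-|Hk].
  - assert (0 <= sumR l f) by (apply sumR_nonneg; auto). lra.
  - pose proof (H a (or_introl eq_refl)). pose proof (IHl f k (fun k h => H k (or_intror h)) Hk). lra.
Qed.

Definition zn (a : Zd) : Z := fold_right (fun x acc => Z.max (Z.abs x) acc) 0%Z a.
Lemma znorm_zn : forall a, znorm a = IZR (zn a). Proof. reflexivity. Qed.

Lemma zn_nonneg : forall a, (0 <= zn a)%Z.
Proof. induction a; simpl; lia. Qed.
Lemma znorm_nonneg : forall a, 0 <= znorm a.
Proof. intros; rewrite znorm_zn; apply IZR_le; apply zn_nonneg. Qed.

Lemma zsub_length : forall a b, length a = length b -> length (zsub a b) = length a.
Proof. induction a; destruct b; simpl; intros; try discriminate; auto. Qed.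

Lemma zn_tri : forall a b, length a = length b -> (zn a <= zn b + zn (zsub a b))%Z.
Proof.
  induction a; destruct b; simpl; intros; try discriminate; try lia.
  injection H; intro H'. specialize (IHa b H').
  pose proof (zn_nonneg b). pose proof (zn_nonneg (zsub a0 b)). lia.
Qed.

Lemma zn_tri3 : forall a b c, length a = length b -> length b = length c ->
  (zn (zsub a c) <= zn (zsub a b) + zn (zsub b c))%Z.
Proof.
  induction a; destruct b; destruct c; simpl; intros; try discriminate; try lia.
  injection H; injection H0; intros. specialize (IHa b c H2 H1).
  pose proof (zn_nonneg (zsub a0 b)). pose proof (zn_nonneg (zsub b c)). lia.
Qed.

Lemma znorm_tri : forall a b, length a = length b -> znorm a <= znorm b + znorm (zsub a b).
Proof. intros. rewrite !znorm_zn, <- plus_IZR. apply IZR_le. apply zn_tri; auto. Qed.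
Lemma znorm_tri3 : forall a b c, length a = length b -> length b = length c ->
  znorm (zsub a c) <= znorm (zsub a b) + znorm (zsub b c).
Proof. intros. rewrite !znorm_zn, <- plus_IZR. apply IZR_le. apply zn_tri3; auto. Qed.

Definition zl1 (a : Zd) : Z := fold_right (fun x acc => Z.abs x + acc)%Z 0%Z a.
Lemma zl1_le : forall a, (zl1 a <= Z.of_nat (length a) * zn a)%Z.
Proof.
  induction a. simpl; lia.
  change (length (a::a0)) with (S (length a0)). rewrite Nat2Z.inj_succ. simpl zl1; simpl zn. fold (zn a0).
  pose proof (zn_nonneg a0). pose proof (Zle_0_nat (length a0)). nia.
Qed.

Lemma zn_zero : forall n, forallb (Z.eqb 0) n = true -> zn n = 0%Z.
Proof.
  induction n; intros; auto. simpl in H. apply Bool.andb_true_iff in H. destruct H.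
  destruct a; try discriminate. simpl. rewrite IHn; auto.
Qed.

Lemma zn_ge_abs : forall a x, In x a -> (Z.abs x <= zn a)%Z.
Proof. induction a; simpl; intros. contradiction. destruct H; subst. lia. specialize (IHa x H). lia. Qed.

Lemma zn_le_all : forall a (M : Z), (0 <= M)%Z -> (forall x, In x a -> (Z.abs x <= M)%Z) -> (zn a <= M)%Z.
Proof.
  induction a; simpl; intros. lia.
  assert (zn a0 <= M)%Z by (apply IHa; auto). specialize (H0 a (or_introl eq_refl)). lia.
Qed.

Definition xsZ (M : nat) : list Z := map (fun k => (Z.of_nat k - Z.of_nat M)%Z) (seq 0 (2 * M + 1)).

Lemma xsZ_in : forall M x, In x (xsZ M) <-> (Z.abs x <= Z.of_nat M)%Z.
Proof.
  intros; unfold xsZ; rewrite in_map_iff; split.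
  - intros [k [<- Hk]]. apply in_seq in Hk. lia.
  - intros H. exists (Z.to_nat (x + Z.of_nat M)). split. lia. apply in_seq. lia.
Qed.

Lemma xsZ_NoDup : forall M, NoDup (xsZ M).
Proof.
  intros; unfold xsZ. apply NoDup_map_inv' || idtac.
  apply FinFun.Injective_map_NoDup. intros x y H; lia. apply seq_NoDup.
Qed.

Lemma xsZ_length : forall M, length (xsZ M) = (2 * M + 1)%nat.
Proof. intros; unfold xsZ. rewrite length_map, length_seq. auto. Qed.

Lemma boxZ_S : forall d M, boxZ (S d) M = flat_map (fun x => map (cons x) (boxZ d M)) (xsZ M).
Proof. reflexivity. Qed.

Lemma boxZ_in : forall d M k, In k (boxZ d M) <->
  (length k = d /\ forall x, In x k -> (Z.abs x <= Z.of_nat M)%Z).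
Proof.
  induction d; intros M k.
  - simpl. split. intros [<-|[]]. split; auto. intros x []. intros [H _]. destruct k; try discriminate. auto.
  - rewrite boxZ_S, in_flat_map. split.
    + intros [x [Hx Hk]]. apply in_map_iff in Hk. destruct Hk as [k' [<- Hk']].
      apply IHd in Hk'. destruct Hk'. apply xsZ_in in Hx. simpl. split. lia.
      intros y [<-|Hy]; auto.
    + intros [Hl Hall]. destruct k as [|x k']; try discriminate. exists x. split.
      apply xsZ_in. apply Hall; left; auto. apply in_map. apply IHd. simpl in Hl. split. lia.
      intros; apply Hall; right; auto.
Qed.

Lemma boxZ_len : forall d M k, In k (boxZ d M) -> length k = d.
Proof. intros. apply boxZ_in in H. tauto. Qed.

Lemma boxZ_zn : forall d M k, In k (boxZ d M) -> (zn k <= Z.of_nat M)%Z.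
Proof. intros. apply boxZ_in in H. destruct H. apply zn_le_all; auto. lia. Qed.

Lemma boxZ_in_zn : forall d M k, length k = d -> (zn k <= Z.of_nat M)%Z -> In k (boxZ d M).
Proof. intros. apply boxZ_in. split; auto. intros. pose proof (zn_ge_abs k x H1). lia. Qed.

Lemma NoDup_flat_map_cons : forall (xs : list Z) (B : list Zd),
  NoDup xs -> NoDup B -> NoDup (flat_map (fun x => map (cons x) B) xs).
Proof.
  induction xs; intros; simpl. constructor.
  inversion H; subst. apply NoDup_app. 
  - apply FinFun.Injective_map_NoDup; auto. intros u v E; injection E; auto.
  - apply IHxs; auto.
  - intros k Hk1 Hk2. apply in_map_iff in Hk1. destruct Hk1 as [k1 [<- _]].
    apply in_flat_map in Hk2. destruct Hk2 as [y [Hy Hk]]. apply in_map_iff in Hk.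
    destruct Hk as [k2 [E _]]. injection E; intros; subst. contradiction.
Qed.

Lemma boxZ_NoDup : forall d M, NoDup (boxZ d M).
Proof.
  induction d; intros. simpl. constructor. intros []. constructor.
  rewrite boxZ_S. apply NoDup_flat_map_cons; auto. apply xsZ_NoDup.
Qed.

Lemma length_flat_map_cons : forall (xs : list Z) (B : list Zd),
  length (flat_map (fun x => map (cons x) B) xs) = (length xs * length B)%nat.
Proof. induction xs; intros; simpl; auto. rewrite length_app, length_map, IHxs. reflexivity. Qed.

Lemma boxZ_length : forall d M, length (boxZ d M) = Nat.pow (2 * M + 1) d.
Proof.
  induction d; intros. simpl; auto. rewrite boxZ_S, length_flat_map_cons, xsZ_length, IHd. simpl. lia.
Qed.

Definition boxb (M : nat) (k : Zd) : bool := Z.leb (zn k) (Z.of_nat M).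

Lemma boxZ_split : forall d M M', (M <= M')%nat ->
  Permutation (boxZ d M') (boxZ d M ++ filter (fun k => negb (boxb M k)) (boxZ d M')).
Proof.
  intros. apply NoDup_Permutation. apply boxZ_NoDup.
  apply NoDup_app. apply boxZ_NoDup. apply NoDup_filter, boxZ_NoDup.
  { intros k H1 H2. apply filter_In in H2. destruct H2 as [_ H2].
    apply boxZ_zn in H1. unfold boxb in H2. apply Bool.negb_true_iff in H2. apply Z.leb_gt in H2. lia. }
  intros k. rewrite in_app_iff, filter_In. split.
  - intros H1. destruct (boxb M k) eqn:E.
    + left. apply boxZ_in_zn. eapply boxZ_len; eauto. unfold boxb in E. apply Z.leb_le in E. auto.
    + right; auto.
  - intros [H1|[H1 _]]; auto. apply boxZ_in_zn. eapply boxZ_len; eauto. apply boxZ_zn in H1. lia.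
Qed.

Definition prodh (h : Z -> R) (k : Zd) : R := fold_right (fun x acc => h x * acc) 1 k.

Lemma sumR_flat_map : forall (xs : list Z) (F : Z -> list Zd) g,
  sumR (flat_map F xs) g = fold_right (fun x acc => sumR (F x) g + acc) 0 xs.
Proof. induction xs; intros; simpl; auto. rewrite sumR_app, IHxs. auto. Qed.

Lemma sumR_map_cons : forall (B : list Zd) x g, sumR (map (cons x) B) g = sumR B (fun k => g (x :: k)).
Proof. induction B; intros; simpl; auto. rewrite IHB; auto. Qed.

Definition sumZ (xs : list Z) (h : Z -> R) : R := fold_right (fun x acc => h x + acc) 0 xs.

Lemma sumR_boxZ_prod : forall d M h, sumR (boxZ d M) (prodh h) = (sumZ (xsZ M) h) ^ d.
Proof.
  induction d; intros.
  - simpl. unfold prodh; simpl. ring.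
  - rewrite boxZ_S, sumR_flat_map. simpl pow. rewrite <- IHd.
    generalize (xsZ M). induction l; simpl. ring.
    rewrite IHl, sumR_map_cons. unfold prodh at 1; simpl.
    rewrite sumR_scal. change (fold_right (fun (x : Z) (acc : R) => h x * acc) 1) with (prodh h). ring.
Qed.

Lemma sumZ_perm : forall l1 l2 h, Permutation l1 l2 -> sumZ l1 h = sumZ l2 h.
Proof. intros; induction H; simpl; auto; lra. Qed.

Lemma xsZ_S : forall M, Permutation (xsZ (S M)) ((Z.of_nat (S M)) :: (- Z.of_nat (S M))%Z :: xsZ M).
Proof.
  intros. apply NoDup_Permutation. apply xsZ_NoDup.
  constructor. intros [E|E]. lia. apply xsZ_in in E. lia.
  constructor. intros E. apply xsZ_in in E. lia. apply xsZ_NoDup.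
  intros x. rewrite !xsZ_in. simpl. rewrite xsZ_in. lia.
Qed.

Lemma sumZ_geom : forall M q, 0 <= q < 1 ->
  sumZ (xsZ M) (fun x => q ^ Z.to_nat (Z.abs x)) <= 1 + 2 * q / (1 - q).
Proof.
  intros M q Hq.
  assert (forall M, sumZ (xsZ M) (fun x => q ^ Z.to_nat (Z.abs x)) = 1 + 2 * q * (1 - q ^ M) / (1 - q)).
  { induction M0.
    - unfold xsZ; simpl. field. lra.
    - rewrite (sumZ_perm _ _ _ (xsZ_S M0)). unfold sumZ at 1. cbn [fold_right]. fold (sumZ (xsZ M0) (fun x : Z => q ^ Z.to_nat (Z.abs x))). rewrite IHM0.
      replace (Z.to_nat (Z.abs (Z.of_nat (S M0)))) with (S M0) by lia.
      replace (Z.to_nat (Z.abs (- Z.of_nat (S M0)))) with (S M0) by lia.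
      simpl pow. field. lra. }
  rewrite H. assert (0 <= q ^ M) by (apply pow_le; lra).
  apply Rplus_le_compat_l. unfold Rdiv. apply Rmult_le_compat_r.
  apply Rlt_le, Rinv_0_lt_compat; lra. nra.
Qed.

Lemma exp_le : forall x y, x <= y -> exp x <= exp y.
Proof. intros. destruct H. apply Rlt_le, exp_increasing; auto. subst; lra. Qed.

Definition Tb (d : nat) (c : R) : R :=
  let q := exp (- (c / INR d)) in (1 + 2 * q / (1 - q)) ^ d.

Lemma prodh_exp : forall b k, prodh (fun x => exp (- b * IZR (Z.abs x))) k = exp (- b * IZR (zl1 k)).
Proof.
  induction k; simpl. rewrite Rmult_0_r, exp_0; auto.
  unfold prodh in *. simpl. rewrite IHk, <- exp_plus. f_equal. rewrite plus_IZR. ring.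
Qed.

Lemma exp_pow_nat : forall b n, exp (- b * INR n) = exp (- b) ^ n.
Proof.
  induction n. simpl. rewrite Rmult_0_r, exp_0; auto.
  rewrite S_INR. simpl. rewrite <- IHn, <- exp_plus. f_equal. ring.
Qed.

Lemma sumZ_ext : forall l f g, (forall x, f x = g x) -> sumZ l f = sumZ l g.
Proof. induction l; intros; simpl; auto. rewrite H, (IHl f g); auto. Qed.

Lemma sumZ_nonneg : forall l f, (forall x, 0 <= f x) -> 0 <= sumZ l f.
Proof. induction l; intros; simpl. lra. pose proof (H a); pose proof (IHl f H); lra. Qed.

Lemma Tb_pos : forall d c, 0 < c -> (1 <= d)%nat -> 0 < Tb d c.
Proof.
  intros. unfold Tb. apply pow_lt.
  assert (0 < INR d) by (apply lt_0_INR; lia).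
  assert (0 < exp (- (c / INR d)) < 1).
  { split. apply exp_pos. rewrite <- exp_0. apply exp_increasing.
    assert (0 < c / INR d) by (apply Rdiv_lt_0_compat; auto). lra. }
  assert (0 < 2 * exp (- (c / INR d)) / (1 - exp (- (c / INR d)))).
  { apply Rdiv_lt_0_compat; lra. } lra.
Qed.

Lemma box_exp_sum : forall d c M, (1 <= d)%nat -> 0 < c ->
  sumR (boxZ d M) (fun k => exp (- c * znorm k)) <= Tb d c.
Proof.
  intros d c M Hd Hc.
  assert (HdR : 0 < INR d) by (apply lt_0_INR; lia).
  set (b := c / INR d).
  assert (Hb : 0 < b) by (apply Rdiv_lt_0_compat; auto).
  set (h := fun x : Z => exp (- b * IZR (Z.abs x))).
  apply Rle_trans with (sumR (boxZ d M) (prodh h)).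
  { apply sumR_le. intros k Hk. unfold h. rewrite prodh_exp. apply exp_le.
    pose proof (zl1_le k). rewrite (boxZ_len _ _ _ Hk) in H.
    apply IZR_le in H. rewrite mult_IZR, <- INR_IZR_INZ in H. rewrite znorm_zn.
    unfold b. unfold Rdiv.
    assert (c * / INR d * IZR (zl1 k) <= c * IZR (zn k)); [|lra].
    apply Rmult_le_reg_l with (INR d); auto.
    replace (INR d * (c * / INR d * IZR (zl1 k))) with (c * IZR (zl1 k)) by (field; lra).
    replace (INR d * (c * IZR (zn k))) with (c * (INR d * IZR (zn k))) by ring.
    apply Rmult_le_compat_l; lra. }
  rewrite sumR_boxZ_prod. unfold Tb. fold b. apply pow_incr. split.
  apply sumZ_nonneg. intros; unfold h; apply Rlt_le, exp_pos.
  assert (Hq : 0 <= exp (- b) < 1).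
  { split. apply Rlt_le, exp_pos. rewrite <- exp_0. apply exp_increasing. lra. }
  rewrite (sumZ_ext _ _ (fun x => exp (-b) ^ Z.to_nat (Z.abs x))).
  apply sumZ_geom; auto.
  intros x. unfold h. rewrite <- exp_pow_nat. f_equal. rewrite INR_IZR_INZ. f_equal. f_equal. lia.
Qed.

Lemma Csub_Cadd : forall a b, Csub (Cadd a b) a = b.
Proof. intros; unfold Csub, Cadd; ceq. Qed.

Lemma exp_small : forall B eps, 0 < eps -> exists M0 : nat, forall y, INR M0 <= y -> B * exp (- y) < eps.
Proof.
  intros B eps He.
  destruct (Rle_lt_dec B 0).
  - exists 0%nat. intros. pose proof (exp_pos (-y)). nra.
  - destruct (archimed (B / eps)) as [H1 _].
    exists (Z.to_nat (up (B / eps))). intros y Hy.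
    assert (B / eps < y).
    { rewrite INR_IZR_INZ in Hy. rewrite Z2Nat.id in Hy. lra.
      apply le_IZR. assert (0 < B / eps) by (apply Rdiv_lt_0_compat; auto). lra. }
    assert (0 < y) by (assert (0 < B / eps) by (apply Rdiv_lt_0_compat; auto); lra).
    pose proof (exp_ineq1 y ltac:(lra)).
    assert (exp (-y) * exp y = 1) by (rewrite <- exp_plus; replace (-y+y) with 0 by ring; apply exp_0).
    assert (B < eps * y) by (apply Rmult_lt_reg_r with (/ eps); [apply Rinv_0_lt_compat; auto|];
      replace (eps * y * / eps) with y by (field; lra); exact H).
    pose proof (exp_pos (-y)). nra.
Qed.

Lemma lsum_bound : forall d (F : Zd -> Cx) A c, (1 <= d)%nat -> 0 < c -> 0 <= A ->
  (forall k, length k = d -> Cabs (F k) <= A * exp (- c * znorm k)) ->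
  has_lsum d F (lsum d F) /\ Cabs (lsum d F) <= A * Tb d c.
Proof.
  intros d F A c Hd Hc HA HF.
  set (s := fun M : nat => sumC (boxZ d M) F).
  assert (Hpart : forall M, Cabs (s M) <= A * Tb d c).
  { intros M. unfold s. eapply Rle_trans. apply sumC_abs.
    eapply Rle_trans. apply sumR_le with (g := fun k => A * exp (- c * znorm k)).
    intros; apply HF; eapply boxZ_len; eauto.
    rewrite sumR_scal. apply Rmult_le_compat_l; auto. apply box_exp_sum; auto. }
  assert (Htail : forall M M', (M <= M')%nat ->
    Cabs (Csub (s M') (s M)) <= A * Tb d (c/2) * exp (- (c/2) * INR (S M))).
  { intros M M' HM. unfold s. rewrite (sumC_perm _ _ F (boxZ_split d M M' HM)).
    rewrite sumC_app, Csub_Cadd. eapply Rle_trans. apply sumC_abs.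
    eapply Rle_trans. apply sumR_le with
      (g := fun k => A * exp (- (c/2) * INR (S M)) * exp (- (c/2) * znorm k)).
    { intros k Hk. apply filter_In in Hk. destruct Hk as [Hk Hb].
      eapply Rle_trans. apply HF; eapply boxZ_len; eauto.
      rewrite Rmult_assoc, <- exp_plus. apply Rmult_le_compat_l; auto. apply exp_le.
      unfold boxb in Hb. apply Bool.negb_true_iff, Z.leb_gt in Hb.
      assert (INR (S M) <= znorm k).
      { rewrite znorm_zn, INR_IZR_INZ. apply IZR_le. lia. }
      assert (c/2 * INR (S M) <= c/2 * znorm k) by (apply Rmult_le_compat_l; lra). lra. }
    rewrite sumR_scal.
    replace (A * Tb d (c / 2) * exp (- (c / 2) * INR (S M))) with
      (A * exp (- (c / 2) * INR (S M)) * Tb d (c / 2)) by ring.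
    apply Rmult_le_compat_l. apply Rmult_le_pos; auto; apply Rlt_le, exp_pos.
    eapply Rle_trans. 2: apply (box_exp_sum d (c/2) M'); auto; lra.
    rewrite (sumR_filter (boxb M) (boxZ d M')) .
    assert (0 <= sumR (filter (boxb M) (boxZ d M')) (fun k => exp (- (c / 2) * znorm k))).
    { apply sumR_nonneg; intros; apply Rlt_le, exp_pos. } lra. }
  set (B := A * Tb d (c/2)).
  assert (HB : 0 <= B) by (unfold B; apply Rmult_le_pos; auto; apply Rlt_le, Tb_pos; auto; lra).
  assert (Hcauchy : forall eta, 0 < eta -> exists M0, forall M M', (M0 <= M)%nat -> (M0 <= M')%nat ->
    Cabs (Csub (s M') (s M)) < eta).
  { intros eta He. destruct (exp_small B eta He) as [M0 HM0]. exists (Z.to_nat (up (2 / c * INR M0))).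
    assert (Hup : forall M, (Z.to_nat (up (2 / c * INR M0)) <= M)%nat -> INR M0 <= c / 2 * INR (S M)).
    { intros M HM. apply le_INR in HM. rewrite S_INR.
      destruct (archimed (2 / c * INR M0)) as [H1 _].
      rewrite INR_IZR_INZ, Z2Nat.id in HM. 2:{ apply le_IZR. pose proof (pos_INR M0).
        assert (0 <= 2 / c * INR M0) by (apply Rmult_le_pos; auto; apply Rlt_le, Rdiv_lt_0_compat; lra). lra. }
      assert (2 / c * INR M0 <= INR M + 1) by lra.
      apply Rmult_le_compat_l with (r := c/2) in H; [|lra].
      replace (c / 2 * (2 / c * INR M0)) with (INR M0) in H by (field; lra). lra. }
    intros M M' H1 H2. destruct (Nat.le_ge_cases M M') as [HMM|HMM].
    - eapply Rle_lt_trans. apply Htail; auto. fold B.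
      replace (- (c / 2) * INR (S M)) with (- (c / 2 * INR (S M))) by ring. apply HM0. apply Hup; auto.
    - rewrite Cabs_opp_sub. eapply Rle_lt_trans. apply Htail; auto. fold B.
      replace (- (c / 2) * INR (S M')) with (- (c / 2 * INR (S M'))) by ring. apply HM0. apply Hup; auto. }
  assert (Hre : Cauchy_crit (fun M => re (s M))).
  { intros eta He. destruct (Hcauchy eta He) as [M0 HM0]. exists M0. intros n m Hn Hm.
    unfold R_dist. eapply Rle_lt_trans. 2: apply (HM0 m n); lia.
    eapply Rle_trans. 2: apply Cabs_re. simpl. right; reflexivity. }
  assert (Him : Cauchy_crit (fun M => im (s M))).
  { intros eta He. destruct (Hcauchy eta He) as [M0 HM0]. exists M0. intros n m Hn Hm.
    unfold R_dist. eapply Rle_lt_trans. 2: apply (HM0 m n); lia.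
    eapply Rle_trans. 2: apply Cabs_im. simpl. right; reflexivity. }
  destruct (R_complete _ Hre) as [lr Hlr]. destruct (R_complete _ Him) as [li Hli].
  assert (Hex : has_lsum d F (mkC lr li)).
  { intros eta He. destruct (Hlr (eta/2)) as [M1 HM1]; [lra|]. destruct (Hli (eta/2)) as [M2 HM2]; [lra|].
    exists (Nat.max M1 M2). intros M HM. eapply Rle_lt_trans. apply Cabs_le_parts.
    simpl. specialize (HM1 M ltac:(lia)). specialize (HM2 M ltac:(lia)). unfold R_dist in *.
    fold (s M). lra. }
  assert (Hl : has_lsum d F (lsum d F)).
  { unfold lsum. apply epsilon_spec. exists (mkC lr li); auto. }
  split; auto.
  apply Rnot_lt_le. intro Hlt.
  set (eta := Cabs (lsum d F) - A * Tb d c).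
  destruct (Hl eta) as [M0 HM0]. unfold eta; lra.
  specialize (HM0 M0 (le_n _)). fold (s M0) in HM0.
  pose proof (Cabs_sub_le (lsum d F) (s M0)). rewrite Cabs_opp_sub in H.
  pose proof (Hpart M0). unfold eta in HM0. lra.
Qed.

Lemma conv_bound : forall d g h A B a a', (1 <= d)%nat -> 0 < a' < a -> 0 <= A -> 0 <= B ->
  (forall k, length k = d -> Cabs (g k) <= A * exp (- a * znorm k)) ->
  (forall k, length k = d -> Cabs (h k) <= B * exp (- a * znorm k)) ->
  forall n, length n = d -> Cabs (conv d g h n) <= A * B * Tb d (a - a') * exp (- a' * znorm n).
Proof.
  intros d g h A B a a' Hd Ha HA HB Hg Hh n Hn. unfold conv.
  assert (0 <= A * B * exp (- a' * znorm n)) by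
    (apply Rmult_le_pos; [apply Rmult_le_pos; auto| apply Rlt_le, exp_pos]).
  destruct (lsum_bound d (fun k => Cmul (g k) (h (zsub n k))) (A * B * exp (- a' * znorm n)) (a - a'))
    as [_ H2]; auto; try lra.
  - intros k Hk. rewrite Cabs_mul.
    assert (Hl : length (zsub n k) = d) by (rewrite zsub_length; lia).
    apply Rle_trans with (A * exp (- a * znorm k) * (B * exp (- a * znorm (zsub n k)))).
    { apply Rmult_le_compat; [apply Cabs_nonneg|apply Cabs_nonneg|apply Hg; auto|apply Hh; auto]. }
    replace (A * exp (- a * znorm k) * (B * exp (- a * znorm (zsub n k)))) with
      (A * B * (exp (- a * znorm k) * exp (- a * znorm (zsub n k)))) by ring.
    replace (A * B * exp (- a' * znorm n) * exp (- (a - a') * znorm k)) with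
      (A * B * (exp (- a' * znorm n) * exp (- (a - a') * znorm k))) by ring.
    apply Rmult_le_compat_l. apply Rmult_le_pos; auto.
    rewrite <- !exp_plus. apply exp_le.
    pose proof (znorm_tri n k ltac:(lia)).
    pose proof (znorm_nonneg k). pose proof (znorm_nonneg (zsub n k)).
    assert (a' * znorm n <= a' * (znorm k + znorm (zsub n k))) by (apply Rmult_le_compat_l; lra).
    assert (a' * znorm (zsub n k) <= a * znorm (zsub n k)) by (apply Rmult_le_compat_r; lra).
    lra.
Qed.

Lemma cpow_bound : forall d (u : Zd -> Cx) rho C p, (1 <= d)%nat -> 0 < rho -> 0 < C -> (1 <= p)%nat ->
  forall j, (j <= p)%nat -> exists K, 0 <= K /\ forall u : Zd -> Cx,
    (forall n, length n = d -> Cabs (u n) <= C * exp (- rho * znorm n)) ->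
    forall n, length n = d -> Cabs (cpow d u j n) <= K * exp (- (rho - INR j * (rho / (10 * INR p))) * znorm n).
Proof.
  intros d u0 rho C p Hd Hr HC Hp.
  assert (HpR : 1 <= INR p) by (apply (le_INR 1); auto).
  set (s := rho / (10 * INR p)).
  assert (Hs : 0 < s) by (apply Rdiv_lt_0_compat; lra).
  assert (Hsp : INR p * s = rho / 10) by (unfold s; field; lra).
  induction j; intros Hj.
  - exists 1. split. lra. intros u Hu n Hn. simpl. unfold delta0.
    destruct (forallb (Z.eqb 0) n) eqn:E.
    + rewrite znorm_zn, zn_zero; auto. unfold Cabs, C1; simpl.
      replace (1*1+0*0) with 1 by ring. rewrite sqrt_1. rewrite Rmult_0_r, exp_0. lra.
    + rewrite Cabs_C0. rewrite Rmult_1_l. apply Rlt_le, exp_pos.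
  - destruct IHj as [K [HK HKb]]. lia.
    assert (HjR : INR (S j) <= INR p) by (apply le_INR; auto).
    assert (Hjs : INR (S j) * s <= rho / 10) by (rewrite <- Hsp; apply Rmult_le_compat_r; lra).
    rewrite S_INR in Hjs.
    exists (C * K * Tb d s). split.
    { apply Rmult_le_pos. apply Rmult_le_pos; lra. apply Rlt_le, Tb_pos; auto. }
    intros u Hu n Hn. simpl cpow.
    replace s with ((rho - INR j * s) - (rho - INR (S j) * s)) at 1 by (rewrite S_INR; ring).
    apply conv_bound; auto; try lra.
    + rewrite S_INR. split. lra. lra.
    + intros k Hk. eapply Rle_trans. apply Hu; auto. apply Rmult_le_compat_l. lra. apply exp_le.
      pose proof (znorm_nonneg k). assert (0 <= INR j * s) by (apply Rmult_le_pos; [apply pos_INR|lra]).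
      assert ((rho - INR j * s) * znorm k <= rho * znorm k) by (apply Rmult_le_compat_r; lra). lra.
Qed.

Lemma fhat_bound : forall d fhat a, (1 <= d)%nat -> 0 < a -> real_trig_poly d fhat ->
  exists F, 0 <= F /\ forall k, length k = d -> Cabs (fhat k) <= F * exp (- a * znorm k).
Proof.
  intros d fhat a Hd Ha [[Mf HMf] _].
  set (F0 := sumR (boxZ d Mf) (fun k => Cabs (fhat k))).
  assert (HF0 : 0 <= F0) by (apply sumR_nonneg; intros; apply Cabs_nonneg).
  exists (F0 * exp (a * INR Mf)). split. apply Rmult_le_pos; auto. apply Rlt_le, exp_pos.
  intros k Hk. destruct (Rlt_le_dec (INR Mf) (znorm k)).
  - rewrite HMf; auto. rewrite Cabs_C0. apply Rmult_le_pos. apply Rmult_le_pos; auto.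
    apply Rlt_le, exp_pos. apply Rlt_le, exp_pos.
  - assert (Hin : In k (boxZ d Mf)).
    { apply boxZ_in_zn; auto. rewrite znorm_zn, INR_IZR_INZ in r. apply le_IZR in r. auto. }
    pose proof (sumR_in_le (boxZ d Mf) (fun k => Cabs (fhat k)) k (fun _ _ => Cabs_nonneg _) Hin).
    simpl in H. fold F0 in H. rewrite Rmult_assoc, <- exp_plus.
    assert (1 <= exp (a * INR Mf + - a * znorm k)).
    { rewrite <- exp_0. apply exp_le. assert (a * znorm k <= a * INR Mf) by (apply Rmult_le_compat_l; lra). lra. }
    nra.
Qed.

Lemma Su_bound : forall d p fhat rho C, (1 <= d)%nat -> (2 <= p)%nat -> 0 < rho -> 0 < C ->
  real_trig_poly d fhat ->
  exists K, 0 <= K /\ forall u : Zd -> Cx,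
    (forall n, length n = d -> Cabs (u n) <= C * exp (- rho * znorm n)) ->
    forall n n', length n = d -> length n' = d ->
      Cabs (Su d p fhat u n n') <= K * exp (- (9 * rho / 10) * znorm (zsub n n')).
Proof.
  intros d p fhat rho C Hd Hp Hr HC Hf.
  assert (HpR : 2 <= INR p) by (apply (le_INR 2); auto).
  set (s := rho / (10 * INR p)).
  assert (Hs : 0 < s) by (apply Rdiv_lt_0_compat; lra).
  assert (Hsp : INR p * s = rho / 10) by (unfold s; field; lra).
  destruct (cpow_bound d (fun _ => C0) rho C p Hd Hr HC ltac:(lia) (p - 1) ltac:(lia)) as [K [HK HKb]].
  rewrite minus_INR in HKb by lia. simpl INR in HKb. fold s in HKb.
  set (a := rho - (INR p - 1) * s).
  assert (Ha : 9 * rho / 10 < a) by (unfold a; lra).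
  destruct (fhat_bound d fhat a Hd ltac:(lra) Hf) as [F [HF HFb]].
  exists (INR p * (F * K * Tb d s)). split.
  { apply Rmult_le_pos. lra. apply Rmult_le_pos. apply Rmult_le_pos; auto. apply Rlt_le, Tb_pos; auto. }
  intros u Hu n n' Hn Hn'. unfold Su. rewrite Cabs_scal, Rabs_right by lra. rewrite Rmult_assoc.
  apply Rmult_le_compat_l. lra.
  replace s with (a - 9 * rho / 10) at 1 by (unfold a; lra).
  apply conv_bound; auto. lra.
  rewrite zsub_length; lia.
Qed.

Lemma dsum_nonneg : forall nu th n, 0 <= dsum nu th n.
Proof.
  induction nu; destruct th; destruct n; simpl; try lra.
  specialize (IHnu th n). pose proof (pow2_ge_0 (a * IZR z + r)). lra.
Qed.

Lemma dsum_set : forall j nu th n t, (j < length nu)%nat -> length nu = length th -> length th = length n ->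
  dsum nu (set_nthR th j t) n =
    (dsum nu th n - (nth j nu 0 * IZR (nth j n 0%Z) + nth j th 0) ^ 2)
    + (nth j nu 0 * IZR (nth j n 0%Z) + t) ^ 2 /\
  0 <= dsum nu th n - (nth j nu 0 * IZR (nth j n 0%Z) + nth j th 0) ^ 2.
Proof.
  induction j; intros nu th n t Hj H1 H2;
    destruct nu as [|x nu]; destruct th as [|y th]; destruct n as [|z n]; simpl in *; try lia.
  - split. ring. pose proof (dsum_nonneg nu th n). lra.
  - destruct (IHj nu th n t) as [A B]; try lia. rewrite A. split. ring.
    pose proof (pow2_ge_0 (x * IZR z + y)). lra.
Qed.

Lemma sum_nth_le : forall (I : list (R * R)) (f : R * R -> R) K,
  (forall x, In x I -> 0 <= f x) -> f (0, 0) = 0 ->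
  sum_f_R0 (fun k => f (nth k I (0, 0))) K <= fold_right (fun x acc => f x + acc) 0 I.
Proof.
  induction I; intros f K Hf H0.
  - simpl. induction K; simpl. rewrite H0; lra. destruct K; rewrite H0; simpl in *; lra.
  - destruct K.
    + simpl. assert (0 <= fold_right (fun x acc => f x + acc) 0 I).
      { clear IHI. induction I; simpl. lra. pose proof (Hf a0 (or_intror (or_introl eq_refl))).
        assert (0 <= fold_right (fun x acc => f x + acc) 0 I); [|lra].
        apply IHI. intros x [<-|Hx]. apply Hf; left; auto. apply Hf; right; right; auto. }
      lra.
    + rewrite decomp_sum by lia. simpl. simpl pred.
      pose proof (IHI f K (fun x h => Hf x (or_intror h)) H0). lra.
Qed.

Lemma cover_intervals : forall (S : R -> Prop) (I : list (R * R)) c,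
  (forall x, In x I -> fst x <= snd x) ->
  (forall t, S t -> exists x, In x I /\ fst x < t < snd x) ->
  fold_right (fun x acc => (snd x - fst x) + acc) 0 I <= c ->
  outer_mes_le S c.
Proof.
  intros S I c HI HS Hc eta He.
  exists (fun k => fst (nth k I (0,0))), (fun k => snd (nth k I (0,0))).
  split; [|split].
  - intros k. destruct (Nat.lt_ge_cases k (length I)).
    + apply HI, nth_In; auto.
    + rewrite nth_overflow; simpl; auto; lra.
  - intros t Ht. destruct (HS t Ht) as [x [Hx Hxt]]. destruct (In_nth I x (0,0) Hx) as [k [_ Hk]].
    exists k. rewrite Hk. auto.
  - intros K. eapply Rle_trans.
    apply (sum_nth_le I (fun x => snd x - fst x)). intros x Hx; pose proof (HI x Hx); lra. simpl; lra. lra.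
Qed.

Lemma quad_interval : forall c a m dl t, 0 <= c -> 0 < dl ->
  Rabs (c + (a + t) ^ 2 - m) < dl ->
  let s := sqrt (Rmax 0 (m - c)) in
  (- a + s - sqrt dl < t < - a + s + sqrt dl) \/ (- a - s - sqrt dl < t < - a - s + sqrt dl).
Proof.
  intros c a m dl t Hc Hdl H s.
  set (x := Rabs (a + t)).
  assert (Hx : 0 <= x) by apply Rabs_pos.
  assert (Hx2 : x * x = (a + t) ^ 2) by (unfold x; rewrite <- Rabs_mult, Rabs_right; [ring| apply Rle_ge; sqp (a+t); lra]).
  assert (Hs : 0 <= s) by apply sqrt_pos.
  assert (Hxs : Rabs (x - s) < sqrt dl).
  { rewrite <- sqrt_Rsqr_abs. apply sqrt_lt_1_alt. split. apply Rle_0_sqr. unfold Rsqr.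
    unfold Rmax in s. destruct (Rle_dec 0 (m - c)).
    - assert (s * s = m - c) by (unfold s; apply sqrt_sqrt; auto).
      apply Rabs_def2 in H. destruct H.
      destruct (Rle_dec x s).
      + assert ((x - s) * (x - s) <= (s - x) * (s + x)) by nra. nra.
      + assert ((x - s) * (x - s) <= (x - s) * (x + s)) by nra. nra.
    - assert (s = 0) by (unfold s; apply sqrt_0). rewrite H0.
      apply Rabs_def2 in H. destruct H. nra. }
  apply Rabs_def2 in Hxs. destruct Hxs.
  unfold x in *. destruct (Rle_dec 0 (a + t)).
  - rewrite Rabs_right in * by lra. left; lra.
  - rewrite Rabs_left in * by lra. right; lra.
Qed.

Definition sumN (P : nat) (f : nat -> Cx) : Cx := fold_right (fun i acc => Cadd (f i) acc) C0 (seq 0 P).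

Definition inv_stmt : Prop :=
  forall (P : nat) (A : nat -> nat -> Cx),
  (forall w : nat -> Cx, (forall j, Peano.lt j P -> sumN P (fun i => Cmul (w i) (A i j)) = C0) ->
     forall i, Peano.lt i P -> w i = C0) ->
  exists B : nat -> nat -> Cx, forall i j, Peano.lt i P -> Peano.lt j P ->
    sumN P (fun k => Cmul (A i k) (B k j)) = (if Nat.eqb i j then Defs.C1 else C0) /\
    sumN P (fun k => Cmul (B i k) (A k j)) = (if Nat.eqb i j then Defs.C1 else C0).

Module LA.
Import ssreflect ssrfun ssrbool eqtype ssrnat seq fintype bigop ssralg matrix mxalgebra Rstruct complex.
Import GRing.Theory.
Local Open Scope ring_scope.

Definition phi (z : Cx) : R[i] := Complex (re z) (im z).
Definition psi (z : R[i]) : Cx := mkC (Re z) (Im z).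

Lemma psi_phi z : psi (phi z) = z. Proof. by case: z. Qed.
Lemma phi_psi z : phi (psi z) = z. Proof. by case: z. Qed.

Lemma phi_add z w : phi (Cadd z w) = phi z + phi w.
Proof. by case: z; case: w. Qed.
Lemma phi_mul z w : phi (Cmul z w) = phi z * phi w.
Proof. by case: z => a b; case: w => c e. Qed.
Lemma phi_0 : phi C0 = 0. Proof. by []. Qed.
Lemma phi_1 : phi Defs.C1 = 1. Proof. by []. Qed.

Lemma seq_iota a n : List.seq a n = iota a n.
Proof. by elim: n a => [|n IH] a //=; rewrite IH. Qed.

Lemma phi_sumN (P : nat) f : phi (sumN P f) = \sum_(i < P) phi (f i).
Proof.
  rewrite /sumN. rewrite -(big_mkord xpredT (fun i => phi (f i))).
  rewrite /index_iota subn0 -seq_iota. elim: (List.seq 0 P) => [|a l IH] /=.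
  - by rewrite big_nil.
  - by rewrite big_cons phi_add IH.
Qed.

Lemma phi_inj z w : phi z = phi w -> z = w.
Proof. by move=> H; rewrite -(psi_phi z) H psi_phi. Qed.

Definition ow (P : nat) (f : 'I_P -> R[i]) (i : nat) : Cx :=
  match @insub nat (fun x => (x < P)%N) _ i with Some k => psi (f k) | None => C0 end.

Arguments ow {P}.
Lemma ow_ord P f (k : 'I_P) : ow f k = psi (f k).
Proof. by rewrite /ow valK. Qed.

Definition ow2 (P : nat) (f : 'I_P -> 'I_P -> R[i]) (i j : nat) : Cx :=
  match @insub nat (fun x => (x < P)%N) _ i, @insub nat (fun x => (x < P)%N) _ j with
  | Some a, Some b => psi (f a b) | _, _ => C0 end.

Arguments ow2 {P}.
Lemma ow2_ord P f (a b : 'I_P) : ow2 f a b = psi (f a b).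
Proof. by rewrite /ow2 !valK. Qed.

Lemma ow2_nat P f i j (Hi : (i < P)%N) (Hj : (j < P)%N) :
  @ow2 P f i j = psi (f (Ordinal Hi) (Ordinal Hj)).
Proof. rewrite /ow2 (@insubT nat (fun x => (x < P)%N) _ i Hi) (@insubT nat (fun x => (x < P)%N) _ j Hj). by []. Qed.

Lemma ord_eta P (k : 'I_P) : Ordinal (ltn_ord k) = k.
Proof. by apply: val_inj. Qed.

Lemma finite_inverse : inv_stmt.
Proof.
  rewrite /inv_stmt.
  move=> P A HA.
  pose Mx := \matrix_(i < P, j < P) phi (A i j).
  have Hu : Mx \in unitmx.
  { rewrite -row_free_unit; apply: inj_row_free => v Hv.
    have Hw := HA (ow (fun k => v ord0 k)).
    apply/rowP => k. rewrite mxE.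
    have -> : v ord0 k = phi (ow (fun k => v ord0 k) k) by rewrite ow_ord phi_psi.
    rewrite Hw ?phi_0 //; last by apply/ltP.
    move=> j /ltP Hj. apply: phi_inj. rewrite phi_sumN phi_0.
    transitivity ((v *m Mx) ord0 (Ordinal Hj)); last by rewrite Hv mxE.
    rewrite mxE. apply: eq_bigr => i _. by rewrite phi_mul ow_ord phi_psi mxE. }
  exists (ow2 (fun a b => invmx Mx a b)).
  move=> i j /ltP Hi /ltP Hj. split; apply: phi_inj; rewrite phi_sumN.
  - have := congr1 (fun M : 'M[R[i]]_P => M (Ordinal Hi) (Ordinal Hj)) (mulmxV Hu). rewrite !mxE.
    move=> E. transitivity ((Ordinal Hi == Ordinal Hj)%:R : R[i]); last first.
    { case: (Nat.eqb_spec i j) => [E2|Hne].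
      have -> : (Ordinal Hi == Ordinal Hj) = true by apply/eqP; apply: val_inj; exact E2.
      by rewrite phi_1.
      rewrite phi_0. case: eqP => // E2. exfalso; apply: Hne. by case: E2. }
    rewrite -E. apply: eq_bigr => k _. by rewrite phi_mul (@ow2_nat P _ k j (ltn_ord k) Hj) ord_eta phi_psi mxE.
  - have := congr1 (fun M : 'M[R[i]]_P => M (Ordinal Hi) (Ordinal Hj)) (mulVmx Hu). rewrite !mxE.
    move=> E. transitivity ((Ordinal Hi == Ordinal Hj)%:R : R[i]); last first.
    { case: (Nat.eqb_spec i j) => [E2|Hne].
      have -> : (Ordinal Hi == Ordinal Hj) = true by apply/eqP; apply: val_inj; exact E2.
      by rewrite phi_1.
      rewrite phi_0. case: eqP => // E2. exfalso; apply: Hne. by case: E2. }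
    rewrite -E. apply: eq_bigr => k _. by rewrite phi_mul (@ow2_nat P _ i k Hi (ltn_ord k)) ord_eta phi_psi mxE.
Qed.

End LA.

Definition sumNR (P : nat) (f : nat -> R) : R := fold_right (fun i acc => f i + acc) 0 (seq 0 P).

Lemma fold_ext_C : forall (l : list nat) f g, (forall k, In k l -> f k = g k) ->
  fold_right (fun i acc => Cadd (f i) acc) C0 l = fold_right (fun i acc => Cadd (g i) acc) C0 l.
Proof. induction l; intros; simpl; auto. rewrite H by (left; auto). rewrite (IHl f g); auto. intros; apply H; right; auto. Qed.

Lemma sumN_ext : forall P f g, (forall k, (k < P)%nat -> f k = g k) -> sumN P f = sumN P g.
Proof. intros. unfold sumN. apply fold_ext_C. intros k Hk. apply in_seq in Hk. apply H; lia. Qed.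

Lemma fold_seq_shift_C : forall P s (f : nat -> Cx),
  fold_right (fun i acc => Cadd (f i) acc) C0 (seq (S s) P) =
  fold_right (fun i acc => Cadd (f (S i)) acc) C0 (seq s P).
Proof. induction P; intros; simpl; auto. rewrite IHP. auto. Qed.

Lemma sumC_sumN : forall (l : list Zd) g, sumC l g = sumN (length l) (fun i => g (nth i l nil)).
Proof.
  induction l; intros; simpl. reflexivity.
  unfold sumN. simpl. rewrite fold_seq_shift_C. f_equal. rewrite IHl. reflexivity.
Qed.

Lemma sumN_abs : forall P f, Cabs (sumN P f) <= sumNR P (fun i => Cabs (f i)).
Proof.
  intros. unfold sumN, sumNR. induction (seq 0 P); simpl. rewrite Cabs_C0; lra.
  eapply Rle_trans. apply Cabs_add. lra.
Qed.

Lemma sumNR_le_const : forall P f c, (forall i, (i < P)%nat -> f i <= c) -> sumNR P f <= INR P * c.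
Proof.
  intros. unfold sumNR. rewrite <- (length_seq P 0) at 2.
  assert (forall i, In i (seq 0 P) -> f i <= c) by (intros i Hi; apply in_seq in Hi; apply H; lia).
  clear H. induction (seq 0 P); simpl. lra.
  assert (f a <= c) by (apply H0; left; auto).
  assert (fold_right (fun i acc => f i + acc) 0 l <= INR (length l) * c) by (apply IHl; intros; apply H0; right; auto).
  destruct (length l); simpl in *; lra.
Qed.

Lemma sumN_delta : forall P i0 (x : Cx), (i0 < P)%nat ->
  sumN P (fun i => if Nat.eqb i i0 then x else C0) = x.
Proof.
  intros. unfold sumN.
  assert (forall s, (s <= i0 < s + P)%nat -> fold_right (fun i acc => Cadd (if Nat.eqb i i0 then x else C0) acc) C0 (seq s P) = x).
  { clear H. induction P; intros s Hs; simpl. lia.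
    destruct (Nat.eqb_spec s i0).
    - subst. assert (forall l, (forall k, In k l -> k <> i0) ->
        fold_right (fun i acc => Cadd (if Nat.eqb i i0 then x else C0) acc) C0 l = C0).
      { induction l; intros Hl; simpl; auto. rewrite IHl by (intros; apply Hl; right; auto).
        destruct (Nat.eqb_spec a i0). exfalso; apply (Hl a); auto; left; auto. apply Cadd_0_l. }
      rewrite H. unfold Cadd; apply Cx_eq; simpl; ring.
      intros k Hk. apply in_seq in Hk. lia.
    - rewrite IHP by lia. apply Cadd_0_l. }
  apply H0. lia.
Qed.

Lemma sumN_add : forall P f g, sumN P (fun i => Cadd (f i) (g i)) = Cadd (sumN P f) (sumN P g).
Proof.
  intros. unfold sumN. induction (seq 0 P); simpl. unfold Cadd, C0; apply Cx_eq; simpl; ring.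
  rewrite IHl. unfold Cadd; apply Cx_eq; simpl; ring.
Qed.

Lemma argmax_nat : forall P (f : nat -> R), (0 < P)%nat ->
  exists i0, (i0 < P)%nat /\ forall i, (i < P)%nat -> f i <= f i0.
Proof.
  induction P; intros f HP. lia.
  destruct P. exists 0%nat. split. lia. intros; replace i with 0%nat by lia; lra.
  destruct (IHP f ltac:(lia)) as [i1 [Hi1 H1]].
  destruct (Rle_dec (f (S P)) (f i1)).
  - exists i1. split. lia. intros i Hi. destruct (Nat.eq_dec i (S P)). subst; auto. apply H1; lia.
  - exists (S P). split. lia. intros i Hi. destruct (Nat.eq_dec i (S P)). subst; lra.
    pose proof (H1 i ltac:(lia)). lra.
Qed.

Lemma Cmul_distr_l : forall a b c, Cmul a (Cadd b c) = Cadd (Cmul a b) (Cmul a c).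
Proof. intros; unfold Cmul, Cadd; apply Cx_eq; simpl; ring. Qed.
Lemma Cmul_distr_r : forall a b c, Cmul (Cadd a b) c = Cadd (Cmul a c) (Cmul b c).
Proof. intros; unfold Cmul, Cadd; apply Cx_eq; simpl; ring. Qed.
Lemma Cmul_0_r : forall a, Cmul a C0 = C0.
Proof. intros; unfold Cmul, C0; apply Cx_eq; simpl; ring. Qed.
Lemma Cmul_0_l : forall a, Cmul C0 a = C0.
Proof. intros; unfold Cmul, C0; apply Cx_eq; simpl; ring. Qed.

Definition Amat (D : nat -> R) (E : nat -> nat -> Cx) (i j : nat) : Cx :=
  Cadd (if Nat.eqb i j then mkC (D i) 0 else C0) (E i j).

Lemma nat_inverse : forall P (D : nat -> R) (E : nat -> nat -> Cx) dl e,
  0 < dl -> (forall i, (i < P)%nat -> dl <= Rabs (D i)) ->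
  (forall i j, (i < P)%nat -> (j < P)%nat -> Cabs (E i j) <= e) -> INR P * e < dl ->
  exists B : nat -> nat -> Cx, forall i j, (i < P)%nat -> (j < P)%nat ->
    sumN P (fun k => Cmul (Amat D E i k) (B k j)) = (if Nat.eqb i j then Defs.C1 else C0) /\
    sumN P (fun k => Cmul (B i k) (Amat D E k j)) = (if Nat.eqb i j then Defs.C1 else C0).
Proof.
  intros P D E dl e Hdl HD HE HPe.
  apply (LA.finite_inverse P (Amat D E)).
  intros w Hw i Hi.
  destruct (argmax_nat P (fun i => Cabs (w i)) ltac:(lia)) as [i0 [Hi0 Hmax]].
  specialize (Hw i0 Hi0).
  rewrite (sumN_ext P _ (fun k => Cadd (if Nat.eqb k i0 then Cmul (w i0) (mkC (D i0) 0) else C0)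
     (Cmul (w k) (E k i0)))) in Hw.
  2:{ intros k Hk. unfold Amat. rewrite Cmul_distr_l. destruct (Nat.eqb_spec k i0). subst. reflexivity.
      rewrite Cmul_0_r. reflexivity. }
  rewrite sumN_add, sumN_delta in Hw by auto.
  assert (Habs : Rabs (D i0) * Cabs (w i0) <= INR P * e * Cabs (w i0)).
  { assert (Cmul (w i0) (mkC (D i0) 0) = Csub C0 (sumN P (fun k => Cmul (w k) (E k i0)))).
    { rewrite <- Hw. unfold Csub, Cadd; apply Cx_eq; simpl; ring. }
    pose proof (f_equal Cabs H). rewrite Cabs_mul, Cabs_real in H0.
    rewrite Cabs_opp_sub in H0.
    replace (Csub (sumN P (fun k => Cmul (w k) (E k i0))) C0) with (sumN P (fun k => Cmul (w k) (E k i0))) in H0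
      by (unfold Csub, C0; destruct (sumN P _); apply Cx_eq; simpl; ring).
    pose proof (sumN_abs P (fun k => Cmul (w k) (E k i0))).
    pose proof (sumNR_le_const P (fun k => Cabs (Cmul (w k) (E k i0))) (Cabs (w i0) * e)).
    assert (sumNR P (fun k => Cabs (Cmul (w k) (E k i0))) <= INR P * (Cabs (w i0) * e)).
    { apply H2. intros k Hk. rewrite Cabs_mul. apply Rmult_le_compat; try apply Cabs_nonneg.
      apply Hmax; auto. apply HE; auto. }
    lra. }
  pose proof (HD i0 Hi0). pose proof (Cabs_nonneg (w i0)).
  assert (Cabs (w i0) = 0).
  { destruct (Req_dec (Cabs (w i0)) 0); auto.
    assert (0 < Cabs (w i0)) by lra.
    assert (Rabs (D i0) <= INR P * e) by (apply Rmult_le_reg_r with (Cabs (w i0)); auto). lra. }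
  pose proof (Hmax i Hi). pose proof (Cabs_nonneg (w i)).
  apply Cabs_eq0. lra.
Qed.

Lemma zeqb_spec : forall x y, zeqb x y = true <-> x = y.
Proof. intros; unfold zeqb; destruct (list_eq_dec Z.eq_dec x y); split; intros; congruence. Qed.
Lemma zeqb_refl : forall x, zeqb x x = true.
Proof. intros; apply zeqb_spec; auto. Qed.
Lemma zeqb_false : forall x y, x <> y -> zeqb x y = false.
Proof. intros. destruct (zeqb x y) eqn:E; auto. apply zeqb_spec in E; contradiction. Qed.

Fixpoint pos (x : Zd) (l : list Zd) : nat :=
  match l with nil => 0%nat | y :: l' => if zeqb x y then 0%nat else S (pos x l') end.

Lemma nth_pos : forall l x, In x l -> nth (pos x l) l nil = x /\ (pos x l < length l)%nat.
Proof.
  induction l; intros x Hx; simpl in *. contradiction.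
  destruct (zeqb x a) eqn:E. apply zeqb_spec in E. subst. split; auto; lia.
  destruct Hx as [<-|Hx]. rewrite zeqb_refl in E; discriminate.
  destruct (IHl x Hx). split; auto; lia.
Qed.

Lemma pos_nth : forall l i, NoDup l -> (i < length l)%nat -> pos (nth i l nil) l = i.
Proof.
  induction l; intros i Hl Hi; simpl in *. lia.
  inversion Hl; subst. destruct i.
  - rewrite zeqb_refl; auto.
  - rewrite zeqb_false. rewrite IHl; auto; lia.
    intro E. apply H1. rewrite <- E. apply nth_In. lia.
Qed.

Lemma zeqb_nth : forall l i j, NoDup l -> (i < length l)%nat -> (j < length l)%nat ->
  zeqb (nth i l nil) (nth j l nil) = Nat.eqb i j.
Proof.
  intros. destruct (Nat.eqb_spec i j). subst; apply zeqb_refl.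
  apply zeqb_false. intro E. apply n. eapply NoDup_nth; eauto.
Qed.

Lemma pts_inverse : forall pts (Dg : Zd -> R) (E : Zd -> Zd -> Cx) dl e,
  NoDup pts -> 0 < dl -> (forall n, In n pts -> dl <= Rabs (Dg n)) ->
  (forall n k, In n pts -> In k pts -> Cabs (E n k) <= e) -> INR (length pts) * e < dl ->
  exists G, is_inverse_on pts (fun n k => Cadd (if zeqb n k then mkC (Dg n) 0 else C0) (E n k)) G.
Proof.
  intros pts Dg E dl e Hnd Hdl HD HE HPe.
  set (P := length pts).
  destruct (nat_inverse P (fun i => Dg (nth i pts nil)) (fun i j => E (nth i pts nil) (nth j pts nil)) dl e)
    as [B HB]; auto.
  { intros; apply HD, nth_In; auto. }
  { intros; apply HE; apply nth_In; auto. }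
  exists (fun n n' => B (pos n pts) (pos n' pts)).
  assert (Hidx : forall i j, (i < P)%nat -> (j < P)%nat ->
    sumC pts (fun k => Cmul (Cadd (if zeqb (nth i pts nil) k then mkC (Dg (nth i pts nil)) 0 else C0) (E (nth i pts nil) k))
       (B (pos k pts) j)) = (if Nat.eqb i j then Defs.C1 else C0) /\
    sumC pts (fun k => Cmul (B i (pos k pts)) (Cadd (if zeqb k (nth j pts nil) then mkC (Dg k) 0 else C0) (E k (nth j pts nil))))
       = (if Nat.eqb i j then Defs.C1 else C0)).
  { intros i j Hi Hj. destruct (HB i j Hi Hj) as [H1 H2]. rewrite !sumC_sumN. fold P. split.
    - rewrite <- H1. apply sumN_ext. intros k Hk. rewrite pos_nth by auto. unfold Amat.
      rewrite zeqb_nth by auto. reflexivity.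
    - rewrite <- H2. apply sumN_ext. intros k Hk. rewrite pos_nth by auto. unfold Amat.
      rewrite zeqb_nth by auto. reflexivity. }
  intros n n' Hn Hn'.
  destruct (nth_pos pts n Hn) as [E1 L1]. destruct (nth_pos pts n' Hn') as [E2 L2].
  destruct (Hidx (pos n pts) (pos n' pts) L1 L2) as [H1 H2].
  assert (Hz : zeqb (nth (pos n pts) pts nil) (nth (pos n' pts) pts nil) = Nat.eqb (pos n pts) (pos n' pts))
    by (apply zeqb_nth; auto).
  rewrite E1 in H1, Hz. rewrite E2 in H2, Hz. rewrite Hz. split; auto.
Qed.

Lemma sumC_add : forall l f g, sumC l (fun k => Cadd (f k) (g k)) = Cadd (sumC l f) (sumC l g).
Proof.
  induction l; intros; simpl. unfold Cadd, C0; apply Cx_eq; simpl; ring.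
  rewrite IHl. unfold Cadd; apply Cx_eq; simpl; ring.
Qed.

Lemma sumC_zero : forall l (f : Zd -> Cx), (forall k, In k l -> f k = C0) -> sumC l f = C0.
Proof. induction l; intros; simpl; auto. rewrite H by (left; auto). rewrite IHl. apply Cadd_0_l. intros; apply H; right; auto. Qed.

Lemma sumC_delta : forall l n (f : Zd -> Cx), NoDup l -> In n l ->
  sumC l (fun k => if zeqb n k then f k else C0) = f n.
Proof.
  induction l; intros n f Hl Hn; simpl in *. contradiction. inversion Hl; subst.
  destruct Hn as [<-|Hn].
  - rewrite zeqb_refl. rewrite sumC_zero. unfold Cadd, C0; destruct (f a); apply Cx_eq; simpl; ring.
    intros k Hk. rewrite zeqb_false; auto. intro; subst; contradiction.
  - rewrite zeqb_false. rewrite IHl; auto. apply Cadd_0_l. intro; subst; contradiction.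
Qed.

Lemma argmax_list : forall (A : Type) (l : list A) (f : A -> R), l <> nil ->
  exists x, In x l /\ forall y, In y l -> f y <= f x.
Proof.
  induction l; intros f H. congruence.
  destruct l as [|b l]. exists a. split. left; auto. intros y [<-|[]]; lra.
  destruct (IHl f ltac:(discriminate)) as [x [Hx Hm]].
  destruct (Rle_dec (f a) (f x)).
  - exists x. split. right; auto. intros y [<-|Hy]; auto.
  - exists a. split. left; auto. intros y [<-|Hy]. lra. pose proof (Hm y Hy); lra.
Qed.

Lemma zn_zsub_self : forall n, zn (zsub n n) = 0%Z.
Proof. induction n; simpl; auto. rewrite IHn. lia. Qed.

Lemma Cabs_sub_tri : forall a b, Cabs (Csub a b) <= Cabs a + Cabs b.
Proof.
  intros. replace (Csub a b) with (Cadd a (Cscal (-1) b)) by (unfold Csub, Cadd, Cscal; apply Cx_eq; simpl; ring).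
  eapply Rle_trans. apply Cabs_add. rewrite Cabs_scal. replace (Rabs (-1)) with 1 by (rewrite Rabs_left; lra). lra.
Qed.

Lemma sumC_ext : forall l (f g : Zd -> Cx), (forall k, In k l -> f k = g k) -> sumC l f = sumC l g.
Proof. induction l; intros; simpl; auto. rewrite H by (left; auto). rewrite (IHl f g); auto. intros; apply H; right; auto. Qed.

Lemma green_decay : forall d pts (Dg : Zd -> R) (E G : Zd -> Zd -> Cx) dl e b,
  NoDup pts -> (forall n, In n pts -> length n = d) -> 0 < dl -> 0 <= b -> 0 <= e ->
  (forall n, In n pts -> dl <= Rabs (Dg n)) ->
  (forall n k, In n pts -> In k pts -> Cabs (E n k) * exp (b * znorm (zsub n k)) <= e) ->
  INR (length pts) * e <= dl / 2 ->
  is_inverse_on pts (fun n k => Cadd (if zeqb n k then mkC (Dg n) 0 else C0) (E n k)) G ->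
  forall n n', In n pts -> In n' pts -> Cabs (G n n') * exp (b * znorm (zsub n n')) <= 2 / dl.
Proof.
  intros d pts Dg E G dl e b Hnd Hlen Hdl Hb He HD HE HPe HG.
  set (W := fun x : Zd * Zd => Cabs (G (fst x) (snd x)) * exp (b * znorm (zsub (fst x) (snd x)))).
  assert (HW0 : forall x, 0 <= W x) by (intros; unfold W; apply Rmult_le_pos; [apply Cabs_nonneg|apply Rlt_le, exp_pos]).
  assert (Hkey : forall n n', In n pts -> In n' pts ->
    forall Mx, (forall y, In y (list_prod pts pts) -> W y <= Mx) -> 
      dl * W (n, n') <= 1 + INR (length pts) * (e * Mx)).
  { intros n n' Hn Hn' Mx HMx.
    destruct (HG n n' Hn Hn') as [H1 _].
    rewrite (sumC_ext pts _ (fun k => Cadd (if zeqb n k then Cmul (mkC (Dg n) 0) (G k n') else C0)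
      (Cmul (E n k) (G k n')))) in H1.
    2:{ intros k Hk. rewrite Cmul_distr_r. destruct (zeqb n k); auto. rewrite Cmul_0_l. auto. }
    rewrite sumC_add in H1. rewrite (sumC_delta pts n (fun k => Cmul (mkC (Dg n) 0) (G k n'))) in H1 by auto.
    set (S := sumC pts (fun k => Cmul (E n k) (G k n'))) in H1.
    assert (Cmul (mkC (Dg n) 0) (G n n') = Csub (if zeqb n n' then Defs.C1 else C0) S).
    { rewrite <- H1. unfold Csub, Cadd; apply Cx_eq; simpl; ring. }
    pose proof (f_equal Cabs H). rewrite Cabs_mul, Cabs_real in H0.
    pose proof (Cabs_sub_tri (if zeqb n n' then Defs.C1 else C0) S). rewrite <- H0 in H2.
    set (w := exp (b * znorm (zsub n n'))).
    assert (Hw : 0 < w) by apply exp_pos.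
    assert (Hd1 : Cabs (if zeqb n n' then Defs.C1 else C0) * w <= 1).
    { destruct (zeqb n n') eqn:Ez.
      - apply zeqb_spec in Ez. subst n'. unfold w. rewrite znorm_zn, zn_zsub_self. simpl.
        rewrite Rmult_0_r, exp_0. unfold Cabs, Defs.C1; simpl. replace (1*1+0*0) with 1 by ring.
        rewrite sqrt_1. lra.
      - rewrite Cabs_C0. lra. }
    assert (HS : Cabs S * w <= INR (length pts) * (e * Mx)).
    { eapply Rle_trans. apply Rmult_le_compat_r. lra. apply sumC_abs.
      rewrite Rmult_comm, <- sumR_scal. rewrite <- sumR_const. apply sumR_le.
      intros k Hk. rewrite Cabs_mul.
      assert (Hl : w <= exp (b * znorm (zsub n k)) * exp (b * znorm (zsub k n'))).
      { unfold w. rewrite <- exp_plus. apply exp_le. rewrite <- Rmult_plus_distr_l.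
        apply Rmult_le_compat_l; auto. apply znorm_tri3; rewrite ?Hlen; auto. }
      assert (HWk : W (k, n') <= Mx) by (apply HMx; apply in_prod; auto).
      unfold W in HWk; simpl in HWk.
      pose proof (HE n k Hn Hk).
      apply Rle_trans with ((Cabs (E n k) * exp (b * znorm (zsub n k))) * (Cabs (G k n') * exp (b * znorm (zsub k n')))).
      { pose proof (Cabs_nonneg (E n k)). pose proof (Cabs_nonneg (G k n')).
        replace ((Cabs (E n k) * exp (b * znorm (zsub n k))) * (Cabs (G k n') * exp (b * znorm (zsub k n'))))
          with (Cabs (E n k) * Cabs (G k n') * (exp (b * znorm (zsub n k)) * exp (b * znorm (zsub k n')))) by ring.
        rewrite (Rmult_comm w). apply Rmult_le_compat_l; auto. apply Rmult_le_pos; auto. }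
      apply Rmult_le_compat; auto. apply Rmult_le_pos; [apply Cabs_nonneg|apply Rlt_le, exp_pos].
      apply Rmult_le_pos; [apply Cabs_nonneg|apply Rlt_le, exp_pos]. }
    unfold W; simpl. fold w.
    pose proof (HD n Hn). pose proof (Cabs_nonneg (G n n')).
    assert (dl * Cabs (G n n') <= Rabs (Dg n) * Cabs (G n n')) by (apply Rmult_le_compat_r; auto).
    assert (dl * (Cabs (G n n') * w) <= (Cabs (if zeqb n n' then Defs.C1 else C0) + Cabs S) * w).
    { rewrite <- Rmult_assoc. apply Rmult_le_compat_r. lra. lra. }
    lra. }
  intros n n' Hn Hn'.
  destruct (argmax_list _ (list_prod pts pts) W) as [x0 [Hx0 Hmax]].
  { destruct pts. contradiction. simpl. discriminate. }
  destruct x0 as [a0 b0]. apply in_prod_iff in Hx0. destruct Hx0 as [Ha0 Hb0].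
  pose proof (Hkey a0 b0 Ha0 Hb0 (W (a0, b0)) Hmax).
  assert (INR (length pts) * (e * W (a0, b0)) <= dl / 2 * W (a0, b0)).
  { rewrite <- Rmult_assoc. apply Rmult_le_compat_r; auto. }
  assert (W (a0, b0) <= 2 / dl).
  { apply Rmult_le_reg_l with dl; auto. replace (dl * (2 / dl)) with 2 by (field; lra). lra. }
  pose proof (Hmax (n, n') ltac:(apply in_prod; auto)). unfold W in H2 at 1; simpl in H2. lra.
Qed.

Lemma opnorm_bound : forall pts (G : Zd -> Zd -> Cx) g0, 0 <= g0 ->
  (forall n k, In n pts -> In k pts -> Cabs (G n k) <= g0) ->
  opnorm_le pts G (INR (length pts) ^ 2 * g0).
Proof.
  intros pts G g0 Hg HG v.
  set (L := l2norm pts v). set (P := INR (length pts)).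
  assert (HL : 0 <= L) by apply sqrt_pos.
  assert (HP : 0 <= P) by apply pos_INR.
  assert (Hv : forall k, In k pts -> Cabs (v k) <= L).
  { intros k Hk. unfold L, l2norm. rewrite <- (sqrt_pow2 (Cabs (v k))) by apply Cabs_nonneg.
    apply sqrt_le_1_alt. apply (sumR_in_le pts (fun k => Cabs (v k) ^ 2) k); auto.
    intros; apply pow2_ge_0. }
  assert (HGv : forall n, In n pts -> Cabs (sumC pts (fun k => Cmul (G n k) (v k))) <= P * (g0 * L)).
  { intros n Hn. eapply Rle_trans. apply sumC_abs. unfold P. rewrite <- sumR_const. apply sumR_le.
    intros k Hk. rewrite Cabs_mul. apply Rmult_le_compat; auto; try apply Cabs_nonneg. }
  unfold l2norm at 1.
  assert (Hsum : sumR pts (fun n => Cabs (sumC pts (fun k => Cmul (G n k) (v k))) ^ 2) <= P * (P * (g0 * L)) ^ 2).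
  { unfold P at 1. rewrite <- sumR_const. apply sumR_le. intros n Hn. apply pow_incr. split. apply Cabs_nonneg. auto. }
  assert (HPP : P * (P * (g0 * L)) ^ 2 <= (P ^ 2 * g0 * L) ^ 2).
  { unfold P. destruct (length pts). simpl. nra.
    assert (1 <= INR (S n)) by (apply (le_INR 1); lia).
    set (q := INR (S n)) in *.
    assert (0 <= (q * (g0 * L)) ^ 2) by apply pow2_ge_0.
    replace ((q ^ 2 * g0 * L) ^ 2) with (q * (q * (q * (g0 * L)) ^ 2)) by ring.
    replace (q * (q * (g0 * L)) ^ 2) with (1 * (q * (q * (g0 * L)) ^ 2)) at 1 by ring.
    apply Rmult_le_compat_r; [|lra]. apply Rmult_le_pos; lra. }
  rewrite <- (sqrt_pow2 (P ^ 2 * g0 * L)).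
  2:{ apply Rmult_le_pos; auto. apply Rmult_le_pos; auto. apply pow2_ge_0. }
  apply sqrt_le_1_alt. fold P. lra.
Qed.

Lemma Rpower_pos : forall x y, 0 < Rpower x y.
Proof. intros; unfold Rpower; apply exp_pos. Qed.

Lemma Rpower_ge1_mono : forall N a b, 1 <= N -> a <= b -> Rpower N a <= Rpower N b.
Proof.
  intros. destruct H0. destruct H. apply Rlt_le, Rpower_lt; auto.
  subst. unfold Rpower. rewrite ln_1, !Rmult_0_r. lra. subst; lra.
Qed.

Lemma exp_ge_pow : forall y k, 0 <= y -> (1 <= k)%nat -> (y / INR k) ^ k <= exp y.
Proof.
  intros y k Hy Hk.
  assert (HkR : 0 < INR k) by (apply lt_0_INR; lia).
  assert (exp y = exp (y / INR k) ^ k).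
  { rewrite <- (exp_pow_nat (- (y / INR k)) k) || idtac.
    replace (exp (y / INR k)) with (exp (- (- (y / INR k)))) by (f_equal; ring).
    rewrite <- exp_pow_nat. f_equal. field. lra. }
  rewrite H. apply pow_incr. split. apply Rmult_le_pos; auto. apply Rlt_le, Rinv_0_lt_compat; auto.
  assert (0 <= y / INR k) by (apply Rmult_le_pos; auto; apply Rlt_le, Rinv_0_lt_compat; auto).
  destruct H0. pose proof (exp_ineq1 (y / INR k) ltac:(lra)). lra. rewrite <- H0, exp_0. lra.
Qed.

Lemma Gpoly : forall c s A D, 0 < c -> 0 < s -> exists N1, 1 <= N1 /\ forall N, N1 <= N ->
  A * (2 * N + 3) ^ D <= exp (c * Rpower N s).
Proof.
  intros c s A D Hc Hs.
  destruct (archimed ((INR D + 1) / s)) as [Hk _].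
  set (k := S (Z.to_nat (up ((INR D + 1) / s)))).
  assert (HkR : (INR D + 1) / s <= INR k).
  { unfold k. rewrite S_INR. destruct (Z_le_gt_dec (up ((INR D + 1) / s)) 0).
    - assert (0 < (INR D + 1) / s) by (apply Rdiv_lt_0_compat; auto; pose proof (pos_INR D); lra).
      apply IZR_le in l. lra.
    - rewrite (INR_IZR_INZ (Z.to_nat _)), Z2Nat.id by lia. lra. }
  assert (Hks : INR D + 1 <= s * INR k).
  { apply Rmult_le_compat_l with (r := s) in HkR; [|lra]. replace (s * ((INR D + 1) / s)) with (INR D + 1) in HkR by (field; lra). lra. }
  assert (HkR0 : 0 < INR k) by (apply lt_0_INR; unfold k; lia).
  set (B := Rabs A * 5 ^ D / (c / INR k) ^ k).
  assert (Hck : 0 < (c / INR k) ^ k) by (apply pow_lt; apply Rdiv_lt_0_compat; auto).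
  exists (Rmax 1 B). split. apply Rmax_l. intros N HN.
  assert (HN1 : 1 <= N) by (pose proof (Rmax_l 1 B); lra).
  assert (HNB : B <= N) by (pose proof (Rmax_r 1 B); lra).
  apply Rle_trans with ((c * Rpower N s / INR k) ^ k).
  2:{ apply exp_ge_pow. apply Rmult_le_pos. lra. apply Rlt_le, Rpower_pos. unfold k; lia. }
  replace ((c * Rpower N s / INR k) ^ k) with ((c / INR k) ^ k * (Rpower N s) ^ k)
    by (unfold Rdiv; rewrite <- Rpow_mult_distr; f_equal; ring).
  rewrite <- (Rpower_pow k (Rpower N s)) by apply Rpower_pos. rewrite Rpower_mult.
  assert (Hp : Rpower N (INR D + 1) <= Rpower N (s * INR k)) by (apply Rpower_ge1_mono; auto).
  rewrite Rpower_plus, Rpower_1, Rpower_pow in Hp by lra.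
  assert (H2N : 2 * N + 3 <= 5 * N) by lra.
  assert (A * (2 * N + 3) ^ D <= Rabs A * 5 ^ D * N ^ D).
  { eapply Rle_trans. apply Rle_abs. rewrite Rabs_mult. rewrite (Rabs_right ((2*N+3)^D)) by (apply Rle_ge, pow_le; lra).
    rewrite Rmult_assoc. apply Rmult_le_compat_l. apply Rabs_pos. rewrite <- Rpow_mult_distr. apply pow_incr. lra. }
  assert (Rabs A * 5 ^ D <= (c / INR k) ^ k * N).
  { unfold B in HNB. apply Rmult_le_compat_l with (r := (c / INR k) ^ k) in HNB; [|lra].
    replace ((c / INR k) ^ k * (Rabs A * 5 ^ D / (c / INR k) ^ k)) with (Rabs A * 5 ^ D) in HNB by (field; lra). lra. }
  assert (0 <= N ^ D) by (apply pow_le; lra).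
  assert (Rabs A * 5 ^ D * N ^ D <= (c / INR k) ^ k * N * N ^ D) by (apply Rmult_le_compat_r; auto).
  assert ((c / INR k) ^ k * (N ^ D * N) <= (c / INR k) ^ k * Rpower N (s * INR k)) by (apply Rmult_le_compat_l; lra).
  nra.
Qed.

Lemma Gsub : forall g s c, 0 <= g < s -> 0 < c -> exists N1, 1 <= N1 /\ forall N, N1 <= N ->
  c * Rpower N g <= Rpower N s.
Proof.
  intros g s c Hg Hc.
  set (N1 := Rmax 1 (Rpower (Rmax 1 c) (/ (s - g)))).
  exists N1. split. apply Rmax_l. intros N HN.
  assert (HN1 : 1 <= N) by (pose proof (Rmax_l 1 (Rpower (Rmax 1 c) (/ (s - g)))); unfold N1 in HN; lra).
  assert (Hc1 : c <= Rmax 1 c) by apply Rmax_r.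
  assert (Hc2 : 1 <= Rmax 1 c) by apply Rmax_l.
  assert (c <= Rpower N (s - g)).
  { eapply Rle_trans. apply Hc1.
    replace (Rmax 1 c) with (Rpower (Rpower (Rmax 1 c) (/ (s - g))) (s - g)).
    2:{ rewrite Rpower_mult. replace (/ (s - g) * (s - g)) with 1 by (field; lra). apply Rpower_1; lra. }
    apply Rle_Rpower_l. lra. split. apply Rpower_pos.
    pose proof (Rmax_r 1 (Rpower (Rmax 1 c) (/ (s - g)))). unfold N1 in HN; lra. }
  replace (Rpower N s) with (Rpower N (s - g) * Rpower N g) by (rewrite <- Rpower_plus; f_equal; ring).
  apply Rmult_le_compat_r. apply Rlt_le, Rpower_pos. auto.
Qed.

Lemma fold_flat_len : forall (l : list Zd) (I1 I2 : Zd -> R * R) w,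
  (forall n, snd (I1 n) - fst (I1 n) = w) -> (forall n, snd (I2 n) - fst (I2 n) = w) ->
  fold_right (fun x acc => (snd x - fst x) + acc) 0 (flat_map (fun n => [I1 n; I2 n]) l) = INR (length l) * (2 * w).
Proof.
  induction l; intros. simpl; ring. cbn [flat_map app fold_right]. rewrite (IHl I1 I2 w) by auto. rewrite H, H0.
  change (length (a :: l)) with (S (length l)). rewrite S_INR. ring.
Qed.

Lemma sqrt_exp : forall x, sqrt (exp x) = exp (x / 2).
Proof.
  intros. replace (exp x) with (exp (x/2) * exp (x/2)) by (rewrite <- exp_plus; f_equal; field).
  apply sqrt_square. apply Rlt_le, exp_pos.
Qed.

Lemma up_bound : forall N, 1 <= N -> INR (Z.to_nat (up N)) <= N + 1 /\ N < INR (Z.to_nat (up N)).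
Proof.
  intros. destruct (archimed N). rewrite INR_IZR_INZ, Z2Nat.id. lra.
  apply le_IZR. lra.
Qed.

Lemma opnorm_mono : forall pts G c1 c2, c1 <= c2 -> opnorm_le pts G c1 -> opnorm_le pts G c2.
Proof.
  intros pts G c1 c2 H H1 v. eapply Rle_trans. apply H1. apply Rmult_le_compat_r; auto. apply sqrt_pos.
Qed.

Lemma two_le_exp1 : 2 <= exp 1.
Proof. pose proof (exp_ineq1 1 ltac:(lra)). lra. Qed.

Theorem mainTheorem3 :
  forall (gamma rho C : R) (d : nat) (m : R) (p : nat) (fhat : Zd -> Cx),
    0 < gamma < 1 -> 0 < rho -> 0 < C ->
    (1 <= d)%nat -> 0 < m -> (2 <= p)%nat -> real_trig_poly d fhat ->
  exists (N0 Sig kappa : R),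
    1 <= N0 /\ 1 < Sig /\ 0 < kappa < 1 /\
    forall (eps : R) (u : Zd -> Cx) (N : R) (nu : list R),
      0 < eps < 1 ->
      (forall n, length n = d -> Cabs (u n) <= C * exp (- rho * znorm n)) ->
      N0 <= N -> N <= Rpower (Rabs (ln eps)) Sig ->
      length nu = d -> (forall x, In x nu -> 1 <= x <= 2) ->
      exists X : list R -> Prop,
        (forall j, (j < d)%nat -> forall theta, length theta = d ->
           outer_mes_le (section X theta j) (exp (- Rpower N gamma))) /\
        (forall theta, length theta = d -> ~ X theta ->
           forall r, valid_region d r ->
           let pts := region_pts d N r in
           exists G : Zd -> Zd -> Cx,
             is_inverse_on pts (Fent d p fhat m eps nu theta u) G /\
             opnorm_le pts G (exp (Rpower N kappa)) /\
             (forall n n', In n pts -> In n' pts -> N / 10 <= znorm (zsub n n') ->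
                Cabs (G n n') <= exp (- (4 * rho / 5) * znorm (zsub n n')))).
Proof.
  intros gamma rho C d m p fhat Hg Hr HC Hd Hm Hp Hf.
  set (sg := (1 + gamma) / 2).
  assert (Hsg : gamma < sg < 1) by (unfold sg; lra).
  destruct (Su_bound d p fhat rho C Hd Hp Hr HC Hf) as [K [HK HKb]].
  destruct (Gpoly (1/2) gamma 4 d) as [Na [Na1 HNa]]; try lra.
  destruct (Gpoly (1/2) sg (2 * (K + 1)) (2 * d)) as [Nb [Nb1 HNb]]; try lra.
  destruct (Gsub gamma sg 6) as [Nc [Nc1 HNc]]; try lra.
  destruct (Gsub gamma 1 (600 / rho)) as [Nd [Nd1 HNd]]; try lra.
  { apply Rdiv_lt_0_compat; lra. }
  set (N0 := Rmax (Rmax Na Nb) (Rmax (Rmax Nc Nd) (200 / rho + 1))).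
  assert (HN0a : Na <= N0) by (unfold N0; pose proof (Rmax_l Na Nb); pose proof (Rmax_l (Rmax Na Nb) (Rmax (Rmax Nc Nd) (200 / rho + 1))); lra).
  assert (HN0b : Nb <= N0) by (unfold N0; pose proof (Rmax_r Na Nb); pose proof (Rmax_l (Rmax Na Nb) (Rmax (Rmax Nc Nd) (200 / rho + 1))); lra).
  assert (HN0c : Nc <= N0) by (unfold N0; pose proof (Rmax_l Nc Nd); pose proof (Rmax_l (Rmax Nc Nd) (200 / rho + 1)); pose proof (Rmax_r (Rmax Na Nb) (Rmax (Rmax Nc Nd) (200 / rho + 1))); lra).
  assert (HN0d : Nd <= N0) by (unfold N0; pose proof (Rmax_r Nc Nd); pose proof (Rmax_l (Rmax Nc Nd) (200 / rho + 1)); pose proof (Rmax_r (Rmax Na Nb) (Rmax (Rmax Nc Nd) (200 / rho + 1))); lra).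
  assert (HN0e : 200 / rho + 1 <= N0) by (unfold N0; pose proof (Rmax_r (Rmax Nc Nd) (200 / rho + 1)); pose proof (Rmax_r (Rmax Na Nb) (Rmax (Rmax Nc Nd) (200 / rho + 1))); lra).
  exists N0, (/ sg), sg.
  split. lra. split.
  { replace 1 with (/ 1) by field. apply Rinv_lt_contravar; lra. }
  split. lra.
  intros eps u N nu Heps Hu HN HNeps Hnu Hnu2.
  assert (HN1 : 1 <= N) by lra.
  pose proof (HNa N ltac:(lra)) as Fa.
  pose proof (HNb N ltac:(lra)) as Fb.
  pose proof (HNc N ltac:(lra)) as Fc.
  pose proof (HNd N ltac:(lra)) as Fd. rewrite Rpower_1 in Fd by lra.
  assert (Hlne : ln eps < 0) by (rewrite <- ln_1; apply ln_increasing; lra).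
  assert (Fe : eps <= exp (- Rpower N sg)).
  { assert (Rpower N sg <= - ln eps).
    { replace (- ln eps) with (Rpower (Rabs (ln eps)) (/ sg * sg)).
      2:{ replace (/ sg * sg) with 1 by (field; lra). rewrite Rpower_1. rewrite Rabs_left; lra.
          apply Rabs_pos_lt; lra. }
      rewrite <- Rpower_mult. apply Rle_Rpower_l. lra. lra. }
    rewrite <- (exp_ln eps) by lra. apply exp_le. lra. }
  set (gN := Rpower N gamma). set (sN := Rpower N sg).
  assert (HgN : 0 < gN) by apply Rpower_pos.
  set (dl := exp (- (3 * gN))).
  assert (Hdl : 0 < dl) by apply exp_pos.
  set (M0 := Z.to_nat (up N)).
  destruct (up_bound N HN1) as [HM0 _]. fold M0 in HM0.
  set (L := length (boxZ d M0)).
  assert (HL : INR L <= (2 * N + 3) ^ d).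
  { unfold L. rewrite boxZ_length, pow_INR, plus_INR, mult_INR. simpl (INR 2). simpl (INR 1).
    apply pow_incr. split. pose proof (pos_INR M0); lra. lra. }
  assert (HB1 : 1 <= 2 * N + 3) by lra.
  assert (HL2 : (2 * N + 3) ^ d <= (2 * N + 3) ^ (2 * d)) by (apply Rle_pow; lia || lra).
  exists (fun th => exists n, In n (boxZ d M0) /\ Rabs (dsum nu th n - m) < dl).
  split.
  - intros j Hj th Hth.
    set (a_ := fun n : Zd => nth j nu 0 * IZR (nth j n 0%Z)).
    set (c_ := fun n : Zd => dsum nu th n - (a_ n + nth j th 0) ^ 2).
    set (s_ := fun n : Zd => sqrt (Rmax 0 (m - c_ n))).
    set (sd := sqrt dl).
    apply cover_intervals with (I := flat_map (fun n => [(- a_ n + s_ n - sd, - a_ n + s_ n + sd);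
                                                      (- a_ n - s_ n - sd, - a_ n - s_ n + sd)]) (boxZ d M0)).
    + intros x Hx. apply in_flat_map in Hx. destruct Hx as [n [_ Hx]].
      assert (0 <= sd) by apply sqrt_pos.
      destruct Hx as [<-|[<-|[]]]; simpl; lra.
    + intros t [n [Hn Hlt]]. pose proof (boxZ_len _ _ _ Hn) as Hln.
      destruct (dsum_set j nu th n t) as [E1 E2]; try lia.
      rewrite E1 in Hlt. fold (a_ n) in Hlt, E2. fold (c_ n) in Hlt, E2.
      destruct (quad_interval (c_ n) (a_ n) m dl t E2 Hdl) as [H|H].
      { replace (c_ n + (a_ n + t) ^ 2 - m) with (c_ n + (a_ n + t) ^ 2 - m) by ring. exact Hlt. }
      * eexists. split. apply in_flat_map. exists n. split; auto. left; reflexivity. simpl. exact H.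
      * eexists. split. apply in_flat_map. exists n. split; auto. right; left; reflexivity. simpl. exact H.
    + rewrite (fold_flat_len _ _ _ (2 * sd)) by (intros; simpl; ring). fold L.
      unfold sd, dl. rewrite sqrt_exp.
      assert (INR L * (2 * (2 * exp (- (3 * gN) / 2))) <= exp (1 / 2 * gN) * exp (- (3 * gN) / 2)).
      { replace (INR L * (2 * (2 * exp (- (3 * gN) / 2)))) with (4 * INR L * exp (- (3 * gN) / 2)) by ring.
        apply Rmult_le_compat_r. apply Rlt_le, exp_pos. fold gN in Fa. lra. }
      rewrite <- exp_plus in H. replace (1 / 2 * gN + - (3 * gN) / 2) with (- gN) in H by field. exact H.
  - intros th Hth HX r Hreg pts.
    assert (Hpts : forall n, In n pts -> In n (boxZ d M0)).
    { intros n Hn. unfold pts, region_pts in Hn. apply filter_In in Hn. tauto. }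
    assert (Hnd : NoDup pts) by (unfold pts, region_pts; apply NoDup_filter, boxZ_NoDup).
    assert (Hlen : forall n, In n pts -> length n = d) by (intros; eapply boxZ_len; eauto).
    assert (HP : INR (length pts) <= (2 * N + 3) ^ d).
    { eapply Rle_trans. 2: exact HL. apply le_INR. unfold pts, region_pts. apply filter_length_le. }
    assert (HP0 : 0 <= INR (length pts)) by apply pos_INR.
    assert (HD : forall n, In n pts -> dl <= Rabs (dsum nu th n - m)).
    { intros n Hn. apply Rnot_lt_le. intro. apply HX. exists n. split; auto. }
    set (b := 9 * rho / 10).
    set (e := eps * K).
    assert (He0 : 0 <= e) by (unfold e; apply Rmult_le_pos; lra).
    assert (HE : forall n k, In n pts -> In k pts ->
      Cabs (Cscal eps (Su d p fhat u n k)) * exp (b * znorm (zsub n k)) <= e).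
    { intros n k Hn Hk. rewrite Cabs_scal, Rabs_right by lra.
      pose proof (HKb u Hu n k (Hlen n Hn) (Hlen k Hk)).
      assert (Cabs (Su d p fhat u n k) * exp (b * znorm (zsub n k)) <= K).
      { eapply Rle_trans. apply Rmult_le_compat_r. apply Rlt_le, exp_pos. exact H.
        rewrite Rmult_assoc, <- exp_plus. unfold b. replace (- (9 * rho / 10) * znorm (zsub n k) + 9 * rho / 10 * znorm (zsub n k)) with 0 by ring.
        rewrite exp_0. lra. }
      unfold e. rewrite Rmult_assoc. apply Rmult_le_compat_l; lra. }
    assert (HE' : forall n k, In n pts -> In k pts -> Cabs (Cscal eps (Su d p fhat u n k)) <= e).
    { intros n k Hn Hk. eapply Rle_trans. 2: apply (HE n k Hn Hk).
      rewrite <- (Rmult_1_r (Cabs _)) at 1. apply Rmult_le_compat_l. apply Cabs_nonneg.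
      rewrite <- exp_0. apply exp_le. apply Rmult_le_pos. unfold b; lra. apply znorm_nonneg. }
    assert (Fc' : 3 * gN <= sN / 2) by (unfold gN, sN; lra).
    assert (HPe : INR (length pts) * e <= dl / 2).
    { assert (HKp : (2 * N + 3) ^ (2 * d) * K <= exp (1 / 2 * sN) / 2).
      { assert (0 <= (2 * N + 3) ^ (2 * d)) by (apply pow_le; lra). fold sN in Fb. nra. }
      assert (INR (length pts) * e <= (2 * N + 3) ^ (2 * d) * K * exp (- sN)).
      { unfold e. replace (INR (length pts) * (eps * K)) with ((INR (length pts) * K) * eps) by ring.
        apply Rmult_le_compat. apply Rmult_le_pos; lra. lra. apply Rmult_le_compat_r; lra. exact Fe. }
      eapply Rle_trans. exact H.
      eapply Rle_trans. apply Rmult_le_compat_r. apply Rlt_le, exp_pos. exact HKp.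
      unfold Rdiv. rewrite Rmult_assoc, (Rmult_comm (/2)), <- Rmult_assoc, <- exp_plus.
      apply Rmult_le_compat_r. lra. unfold dl. apply exp_le. lra. }
    destruct (pts_inverse pts (fun n => dsum nu th n - m) (fun n k => Cscal eps (Su d p fhat u n k)) dl e)
      as [G HG]; auto. lra.
    exists G. split. exact HG.
    pose proof (green_decay d pts (fun n => dsum nu th n - m) (fun n k => Cscal eps (Su d p fhat u n k)) G dl e b
      Hnd Hlen Hdl ltac:(unfold b; lra) He0 HD HE HPe HG) as Hdec.
    assert (Hg0 : forall n k, In n pts -> In k pts -> Cabs (G n k) <= 2 / dl).
    { intros n k Hn Hk. eapply Rle_trans. 2: apply (Hdec n k Hn Hk).
      rewrite <- (Rmult_1_r (Cabs _)) at 1. apply Rmult_le_compat_l. apply Cabs_nonneg.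
      rewrite <- exp_0. apply exp_le. apply Rmult_le_pos. unfold b; lra. apply znorm_nonneg. }
    assert (H2dl : 2 / dl = 2 * exp (3 * gN)).
    { unfold dl. unfold Rdiv. rewrite <- exp_Ropp. replace (- - (3 * gN)) with (3 * gN) by ring. auto. }
    split.
    + apply opnorm_mono with (INR (length pts) ^ 2 * (2 / dl)).
      2:{ apply opnorm_bound; auto. apply Rlt_le, Rdiv_lt_0_compat; lra. }
      assert (HP2 : INR (length pts) ^ 2 <= (2 * N + 3) ^ (2 * d)).
      { rewrite Nat.mul_comm, pow_mult. apply pow_incr. split; auto. }
      rewrite H2dl. fold sN.
      assert (2 * (2 * N + 3) ^ (2 * d) <= exp (1 / 2 * sN)).
      { assert (0 <= (2 * N + 3) ^ (2 * d)) by (apply pow_le; lra). fold sN in Fb. nra. }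
      assert (exp (3 * gN) <= exp (1 / 2 * sN)) by (apply exp_le; lra).
      replace (exp sN) with (exp (1 / 2 * sN) * exp (1 / 2 * sN)) by (rewrite <- exp_plus; f_equal; field).
      assert (0 <= INR (length pts) ^ 2) by (apply pow_le; auto).
      pose proof (exp_pos (3 * gN)).
      apply Rle_trans with ((2 * (2 * N + 3) ^ (2 * d)) * exp (3 * gN)).
      { replace (INR (length pts) ^ 2 * (2 * exp (3 * gN))) with (2 * INR (length pts) ^ 2 * exp (3 * gN)) by ring.
        apply Rmult_le_compat_r; lra. }
      apply Rmult_le_compat; try lra; try (apply Rmult_le_pos; [lra | apply pow_le; lra]).
    + intros n n' Hn Hn' Hfar.
      pose proof (Hdec n n' Hn Hn').
      set (z := znorm (zsub n n')) in *.
      assert (Hz : 0 <= z) by apply znorm_nonneg.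
      assert (2 / dl <= exp (rho / 10 * z)).
      { rewrite H2dl. eapply Rle_trans. apply Rmult_le_compat_r. apply Rlt_le, exp_pos. apply two_le_exp1.
        rewrite <- exp_plus. apply exp_le.
        assert (3 * gN <= rho * N / 200).
        { unfold gN. apply Rmult_le_reg_l with (600 / rho). apply Rdiv_lt_0_compat; lra.
          replace (600 / rho * (rho * N / 200)) with (3 * N) by (field; lra).
          replace (600 / rho * (3 * Rpower N gamma)) with (3 * (600 / rho * Rpower N gamma)) by ring. lra. }
        assert (1 <= rho * N / 200).
        { assert (Hq : 200 / rho <= N) by lra. apply Rmult_le_compat_l with (r := rho) in Hq; [|lra].
          replace (rho * (200 / rho)) with 200 in Hq by (field; lra). lra. }
        assert (rho * N / 100 <= rho / 10 * z).
        { assert (rho / 10 * (N / 10) <= rho / 10 * z) by (apply Rmult_le_compat_l; lra). lra. }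
        lra. }
      assert (Cabs (G n n') <= exp (rho / 10 * z) * exp (- b * z)).
      { apply Rmult_le_reg_r with (exp (b * z)). apply exp_pos.
        rewrite Rmult_assoc, <- exp_plus. replace (- b * z + b * z) with 0 by ring. rewrite exp_0. lra. }
      rewrite <- exp_plus in H1. unfold b in H1.
      replace (rho / 10 * z + - (9 * rho / 10) * z) with (- (4 * rho / 5) * z) in H1 by field. exact H1.
Qed.
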